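(* Fix a real number $\beta>-1$. Let $s\in\mathbb{C}$ with $0<|s|<1$ be such that $\psi_s(z)=\dfrac{sz}{1-(1-s)z}$ maps $\mathbb{D}$ into $\mathbb{D}$. Then the composition operator $C_{\psi_s}f=f\circ\psi_s$ is not cyclic on $A^2_\beta$.
   Context: $\mathbb{D}$ is the open unit disc. For $\beta>-1$, $A^2_\beta$ is the Hilbert space of analytic functions $f(z)=\sum_{n\ge0}\widehat f(n)z^n$ on $\mathbb{D}$ with inner product $\langle f,g\rangle=\sum_{n\ge0}\frac{n!\,\Gamma(2+\beta)}{\Gamma(n+2+\beta)}\widehat f(n)\overline{\widehat g(n)}$ (equivalently the $L^2$ inner product with respect to $(\beta+1)(1-|z|^2)^\beta dA(z)$). An operator $T$ on $\mathcal H$ is cyclic if there is $f\in\mathcal H$ such that the linear span of $\{T^nf:n\ge0\}$ is dense in $\mathcal H$. *)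

(* Defs.v *)
From Stdlib Require Import Reals.
From Coquelicot Require Import Coquelicot.
Open Scope R_scope.

(* Weight of the A^2_beta inner product:
   weight beta n = n! Gamma(2+beta) / Gamma(n+2+beta)
                 = prod_{k=1}^n k / (k+1+beta)   (unfolded via Gamma(x+1)=x Gamma(x)). *)
Fixpoint A2weight (beta : R) (n : nat) : R :=
  match n with
  | O => 1
  | S m => A2weight beta m * (INR (S m) / (INR (S m) + 1 + beta))
  end.

Definition has_coeffs (f : C -> C) (a : nat -> C) : Prop :=
  forall z : C, Cmod z < 1 -> is_series (fun n => Cmult (a n) (pow_n z n)) (f z).

Definition inA2 (beta : R) (f : C -> C) : Prop :=
  exists a : nat -> C, has_coeffs f a /\
    ex_series (fun n => A2weight beta n * (Cmod (a n))^2).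

Definition A2dist_lt (beta : R) (f g : C -> C) (eps : R) : Prop :=
  exists (a b : nat -> C) (L : R), has_coeffs f a /\ has_coeffs g b /\
    is_series (fun n => A2weight beta n * (Cmod (Cminus (a n) (b n)))^2) L /\
    L < eps^2.

Definition cyclic_A2 (beta : R) (T : (C -> C) -> (C -> C)) : Prop :=
  exists f : C -> C, inA2 beta f /\
    forall g : C -> C, inA2 beta g -> forall eps : R, 0 < eps ->
      exists (N : nat) (c : nat -> C),
        A2dist_lt beta g
          (fun z => sum_n (fun k => Cmult (c k) (Nat.iter k T f z)) N) eps.

Definition comp_op (phi : C -> C) (f : C -> C) : C -> C := fun z => f (phi z).

Definition psi (s z : C) : C :=
  Cdiv (Cmult s z) (Cminus (RtoC 1) (Cmult (Cminus (RtoC 1) s) z)).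

Definition psi_self_map (s : C) : Prop :=
  forall z : C, Cmod z < 1 ->
    Cminus (RtoC 1) (Cmult (Cminus (RtoC 1) s) z) <> RtoC 0 /\ Cmod (psi s z) < 1.

(* Main.v *)
Require Import Defs.
From Stdlib Require Import Reals.
From Coquelicot Require Import Coquelicot.
From Stdlib Require Import Lra Lia Arith.
Open Scope R_scope.


Lemma lim_ratio (a b : R) : 0 < b -> is_lim_seq (fun n => (INR n + a) / (INR n + b)) 1.
Proof.
  intros Hb.
  assert (H1 : is_lim_seq (fun n => INR n + b) p_infty).
  { eapply is_lim_seq_plus. apply is_lim_seq_INR. apply is_lim_seq_const. simpl. reflexivity. }
  assert (H2 : is_lim_seq (fun n => / (INR n + b)) 0).
  { replace (Finite 0) with (Rbar_inv p_infty) by reflexivity.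
    apply is_lim_seq_inv; auto. discriminate. }
  apply is_lim_seq_ext with (fun n => 1 + (a - b) * / (INR n + b)).
  { intros n. pose proof (pos_INR n). field. lra. }
  assert (H3 : is_lim_seq (fun n => 1 + (a - b) * / (INR n + b)) (1 + (a - b) * 0)).
  { apply is_lim_seq_plus'. apply is_lim_seq_const.
    apply is_lim_seq_mult'. apply is_lim_seq_const. exact H2. }
  replace (1 + (a - b) * 0) with 1 in H3 by ring. exact H3.
Qed.

Lemma pow_div (a b : R) (N : nat) : b <> 0 -> (a / b) ^ N = a ^ N / b ^ N.
Proof. intros Hb. induction N. simpl; field. simpl. rewrite IHN. field. split; auto. apply pow_nonzero; auto. Qed.

Lemma lim_ratio_pow (a b : R) (N : nat) : 0 < b ->
  is_lim_seq (fun n => ((INR n + a) / (INR n + b)) ^ N) 1.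
Proof.
  intros Hb. induction N.
  - simpl. apply is_lim_seq_const.
  - simpl. assert (H := is_lim_seq_mult' _ _ _ _ (lim_ratio a b Hb) IHN).
    replace (1 * 1) with 1 in H by ring. exact H.
Qed.

Lemma ex_series_bounded (u : nat -> R) : ex_series u -> exists M, forall n, Rabs (u n) <= M.
Proof.
  intros H. apply ex_series_lim_0 in H.
  apply is_lim_seq_spec in H.
  destruct (H (mkposreal 1 Rlt_0_1)) as [N HN].
  exists (1 + sum_f_R0 (fun k => Rabs (u k)) N).
  intros n. destruct (le_lt_dec N n) as [Hn|Hn].
  - specialize (HN n Hn). simpl in HN.
    assert (0 <= sum_f_R0 (fun k => Rabs (u k)) N).
    { apply cond_pos_sum. intros; apply Rabs_pos. }
    replace (u n - 0) with (u n) in HN by ring. lra.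
  - assert (Rabs (u n) <= sum_f_R0 (fun k => Rabs (u k)) N).
    { clear HN H. assert (Hn' : (n <= N)%nat) by lia. clear Hn. induction N.
      assert (n = 0)%nat by lia. subst. simpl. lra. simpl.
      destruct (Nat.eq_dec n (S N)). subst.
      assert (0 <= sum_f_R0 (fun k => Rabs (u k)) N).
      { apply cond_pos_sum. intros; apply Rabs_pos. } lra.
      specialize (IHN ltac:(lia)). pose proof (Rabs_pos (u (S N))). lra. }
    lra.
Qed.

Lemma is_series_zero {K : AbsRing} {V : NormedModule K} :
  is_series (fun _ : nat => (zero : V)) zero.
Proof.
  unfold is_series. apply filterlim_ext with (fun _ => zero).
  intros n. induction n. rewrite sum_O; auto. rewrite sum_Sn, <- IHn, plus_zero_r; auto.
  apply filterlim_const.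
Qed.

Lemma poly_geom_ex (K : R) (N : nat) (x : R) : 0 <= x < 1 ->
  ex_series (fun n => K * (INR n + 1) ^ N * x ^ n).
Proof.
  intros Hx. destruct (Req_dec x 0) as [H0|H0].
  - subst. apply ex_series_incr_1. apply ex_series_ext with (fun _ => 0).
    intros n. simpl. ring. exists 0. apply (is_series_zero (V := R_NormedModule)).
  - assert (ex_series (fun n => Rabs ((INR n + 1) ^ N * x ^ n))).
    { apply ex_series_DAlembert with x. lra.
      intros n. apply Rmult_integral_contrapositive. split; apply pow_nonzero.
      pose proof (pos_INR n); lra. exact H0.
      apply is_lim_seq_ext with (fun n => ((INR n + 2)/(INR n + 1))^N * x).
      intros n. rewrite S_INR.
      assert (Hp : 0 < (INR n + 1) ^ N * x ^ n).
      { apply Rmult_lt_0_compat; apply pow_lt; pose proof (pos_INR n); lra. }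
      assert (Hq : 0 < (INR n + 1 + 1) ^ N * x ^ S n).
      { apply Rmult_lt_0_compat; apply pow_lt; pose proof (pos_INR n); lra. }
      rewrite Rabs_pos_eq by (apply Rlt_le; apply Rdiv_lt_0_compat; auto).
      rewrite pow_div. replace (INR n + 2) with (INR n + 1 + 1) by ring. simpl pow at 4. field. split. apply pow_nonzero. pose proof (pos_INR n); lra. auto. apply pow_nonzero; pose proof (pos_INR n); lra.
      pose proof (pos_INR n); lra.
      assert (Hb : 0 < 1) by lra.
      assert (H := is_lim_seq_mult' _ _ _ _ (lim_ratio_pow 2 1 N Hb) (is_lim_seq_const x)).
      replace (1 * x) with x in H by ring. exact H. }
    apply ex_series_Rabs in H.
    apply ex_series_scal_l with (c := K) in H.
    revert H. apply ex_series_ext. intros n. unfold scal; simpl; unfold mult; simpl. ring.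
Qed.

Fixpoint gp (ca cb : R) (r : nat) : R * R :=
  match r with
  | O => (1, 0)
  | S r' => let p := gp ca cb r' in
      ((fst p * (ca + INR r') - snd p * cb) / (INR r' + 1),
       (fst p * cb + snd p * (ca + INR r')) / (INR r' + 1))
  end.

Fixpoint hh (A : R) (r : nat) : R :=
  match r with O => 1 | S r' => hh A r' * ((A + INR r') / (INR r' + 1)) end.

Lemma hh_pos A r : 0 < A -> 0 < hh A r.
Proof. intros HA; induction r; simpl. lra. pose proof (pos_INR r).
  apply Rmult_lt_0_compat; auto. apply Rdiv_lt_0_compat; lra. Qed.

Lemma gp_bound ca cb r :
  Rabs (fst (gp ca cb r)) + Rabs (snd (gp ca cb r)) <= hh (Rabs ca + Rabs cb + 1) r.
Proof.
  induction r; simpl.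
  - rewrite Rabs_R1, Rabs_R0. lra.
  - set (x := fst (gp ca cb r)) in *. set (y := snd (gp ca cb r)) in *.
    pose proof (pos_INR r) as Hr.
    rewrite !Rabs_div by lra. rewrite (Rabs_pos_eq (INR r + 1)) by lra.
    assert (H1 : Rabs (x * (ca + INR r) - y * cb) <= Rabs x * (Rabs ca + INR r) + Rabs y * Rabs cb).
    { eapply Rle_trans. apply Rabs_triang. rewrite Rabs_Ropp, !Rabs_mult.
      apply Rplus_le_compat_r. apply Rmult_le_compat_l. apply Rabs_pos.
      eapply Rle_trans. apply Rabs_triang. rewrite (Rabs_pos_eq (INR r)) by lra. lra. }
    assert (H2 : Rabs (x * cb + y * (ca + INR r)) <= Rabs x * Rabs cb + Rabs y * (Rabs ca + INR r)).
    { eapply Rle_trans. apply Rabs_triang. rewrite !Rabs_mult.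
      apply Rplus_le_compat_l. apply Rmult_le_compat_l. apply Rabs_pos.
      eapply Rle_trans. apply Rabs_triang. rewrite (Rabs_pos_eq (INR r)) by lra. lra. }
    assert (Hxy : (Rabs x * (Rabs ca + INR r) + Rabs y * Rabs cb) + (Rabs x * Rabs cb + Rabs y * (Rabs ca + INR r))
                  <= (Rabs x + Rabs y) * (Rabs ca + Rabs cb + 1 + INR r)).
    { pose proof (Rabs_pos x); pose proof (Rabs_pos y). nra. }
    assert (Hh : 0 <= hh (Rabs ca + Rabs cb + 1) r).
    { left; apply hh_pos. pose proof (Rabs_pos ca); pose proof (Rabs_pos cb); lra. }
    apply Rle_trans with (((Rabs x + Rabs y) * (Rabs ca + Rabs cb + 1 + INR r)) / (INR r + 1)).
    { unfold Rdiv. rewrite <- Rmult_plus_distr_r. apply Rmult_le_compat_r.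
      left; apply Rinv_0_lt_compat; lra. lra. }
    unfold Rdiv. rewrite <- Rmult_assoc. apply Rmult_le_compat_r. left; apply Rinv_0_lt_compat; lra.
    apply Rmult_le_compat_r. pose proof (Rabs_pos ca); pose proof (Rabs_pos cb); lra. exact IHr.
Qed.

Lemma radius_ge1 (a : nat -> R) :
  (forall r0, 0 <= r0 < 1 -> exists M, forall n, Rabs (a n * r0 ^ n) <= M) ->
  forall x, Rabs x < 1 -> Rbar_lt (Rabs x) (CV_radius a).
Proof.
  intros H x Hx. destruct (CV_radius_bounded a) as [Hub _].
  set (r0 := (Rabs x + 1) / 2).
  assert (Hr0 : 0 <= r0 < 1). { unfold r0; pose proof (Rabs_pos x); lra. }
  specialize (Hub r0 (H r0 Hr0)).
  apply Rbar_lt_le_trans with r0. simpl. unfold r0; lra. exact Hub.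
Qed.

Lemma hh_geom A r0 : 1 <= A -> 0 <= r0 < 1 -> exists M, forall n, Rabs (hh A n * r0 ^ n) <= M.
Proof.
  intros HA Hr0. apply ex_series_bounded.
  destruct (Req_dec r0 0) as [H0|H0].
  - subst. apply ex_series_incr_1. apply ex_series_ext with (fun _ => 0).
    intros n. simpl. ring. exists 0. apply (is_series_zero (V := R_NormedModule)).
  - apply ex_series_Rabs. apply ex_series_DAlembert with r0. lra.
    intros n. apply Rmult_integral_contrapositive. split. apply Rgt_not_eq, hh_pos; lra.
    apply pow_nonzero; auto.
    apply is_lim_seq_ext with (fun n => ((INR n + A) / (INR n + 1)) * r0).
    + intros n. simpl hh. simpl pow.
      assert (Hp : 0 < hh A n * r0 ^ n). { apply Rmult_lt_0_compat. apply hh_pos; lra. apply pow_lt; lra. }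
      pose proof (pos_INR n).
      rewrite Rabs_pos_eq.
      2:{ apply Rlt_le. apply Rdiv_lt_0_compat; auto. apply Rmult_lt_0_compat.
          apply Rmult_lt_0_compat. apply hh_pos; lra. apply Rdiv_lt_0_compat; lra.
          apply Rmult_lt_0_compat. lra. apply pow_lt; lra. }
      field. split. lra. split. apply pow_nonzero; lra. apply Rgt_not_eq, hh_pos; lra.
    + assert (H := is_lim_seq_mult' _ _ _ _ (lim_ratio A 1 Rlt_0_1) (is_lim_seq_const r0)).
      replace (1 * r0) with r0 in H by ring. exact H.
Qed.

Section BIN.
Variables ca cb : R.
Definition gr r := fst (gp ca cb r).
Definition gi r := snd (gp ca cb r).

Lemma gr_radius x : Rabs x < 1 -> Rbar_lt (Rabs x) (CV_radius gr).
Proof.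
  apply radius_ge1. intros r0 Hr0.
  destruct (hh_geom (Rabs ca + Rabs cb + 1) r0) as [M HM]; auto.
  pose proof (Rabs_pos ca); pose proof (Rabs_pos cb); lra.
  exists M. intros n. eapply Rle_trans; [|apply HM].
  rewrite !Rabs_mult. apply Rmult_le_compat_r. apply Rabs_pos.
  pose proof (gp_bound ca cb n). pose proof (Rabs_pos (snd (gp ca cb n))).
  rewrite (Rabs_pos_eq (hh _ n)). unfold gr; lra. left; apply hh_pos.
  pose proof (Rabs_pos ca); pose proof (Rabs_pos cb); lra.
Qed.

Lemma gi_radius x : Rabs x < 1 -> Rbar_lt (Rabs x) (CV_radius gi).
Proof.
  apply radius_ge1. intros r0 Hr0.
  destruct (hh_geom (Rabs ca + Rabs cb + 1) r0) as [M HM]; auto.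
  pose proof (Rabs_pos ca); pose proof (Rabs_pos cb); lra.
  exists M. intros n. eapply Rle_trans; [|apply HM].
  rewrite !Rabs_mult. apply Rmult_le_compat_r. apply Rabs_pos.
  pose proof (gp_bound ca cb n). pose proof (Rabs_pos (fst (gp ca cb n))).
  rewrite (Rabs_pos_eq (hh _ n)). unfold gi; lra. left; apply hh_pos.
  pose proof (Rabs_pos ca); pose proof (Rabs_pos cb); lra.
Qed.

Lemma gr_rec n : PS_derive gr n = ca * gr n - cb * gi n + INR n * gr n.
Proof. unfold PS_derive, gr, gi. simpl gp. cbv zeta. replace (INR (S n)) with (INR n + 1) by (rewrite S_INR; ring). pose proof (pos_INR n). simpl fst; simpl snd. field. lra. Qed.
Lemma gi_rec n : PS_derive gi n = cb * gr n + ca * gi n + INR n * gi n.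
Proof. unfold PS_derive, gr, gi. simpl gp. cbv zeta. replace (INR (S n)) with (INR n + 1) by (rewrite S_INR; ring). pose proof (pos_INR n). simpl fst; simpl snd. field. lra. Qed.

Lemma incr_der (a : nat -> R) n : INR n * a n = PS_incr_1 (PS_derive a) n.
Proof. destruct n. simpl. rewrite Rmult_0_l. reflexivity. simpl. unfold PS_derive. reflexivity. Qed.

Lemma ode_r x : Rabs x < 1 ->
  (1 - x) * PSeries (PS_derive gr) x = ca * PSeries gr x - cb * PSeries gi x.
Proof.
  intros Hx.
  assert (E1 : ex_pseries gr x) by (apply CV_radius_inside, gr_radius; auto).
  assert (E2 : ex_pseries gi x) by (apply CV_radius_inside, gi_radius; auto).
  assert (E3 : ex_pseries (PS_derive gr) x) by (apply ex_pseries_derive, gr_radius; auto).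
  assert (H : PSeries (PS_derive gr) x =
     PSeries (PS_plus (PS_plus (PS_scal ca gr) (PS_scal (- cb) gi)) (PS_incr_1 (PS_derive gr))) x).
  { apply PSeries_ext. intros n. unfold PS_plus, PS_scal. rewrite <- incr_der, gr_rec.
    unfold plus, scal; simpl; unfold mult; simpl. ring. }
  rewrite PSeries_plus in H. rewrite PSeries_plus in H. rewrite !PSeries_scal, PSeries_incr_1 in H.
  lra.
  apply ex_pseries_scal. unfold mult; simpl; ring. auto.
  apply ex_pseries_scal. unfold mult; simpl; ring. auto.
  apply ex_pseries_plus; apply ex_pseries_scal; auto; unfold mult; simpl; ring.
  apply ex_pseries_incr_1; auto.
Qed.

Lemma ode_i x : Rabs x < 1 ->
  (1 - x) * PSeries (PS_derive gi) x = cb * PSeries gr x + ca * PSeries gi x.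
Proof.
  intros Hx.
  assert (E1 : ex_pseries gr x) by (apply CV_radius_inside, gr_radius; auto).
  assert (E2 : ex_pseries gi x) by (apply CV_radius_inside, gi_radius; auto).
  assert (E3 : ex_pseries (PS_derive gi) x) by (apply ex_pseries_derive, gi_radius; auto).
  assert (H : PSeries (PS_derive gi) x =
     PSeries (PS_plus (PS_plus (PS_scal cb gr) (PS_scal ca gi)) (PS_incr_1 (PS_derive gi))) x).
  { apply PSeries_ext. intros n. unfold PS_plus, PS_scal. rewrite <- incr_der, gi_rec.
    unfold plus, scal; simpl; unfold mult; simpl. ring. }
  rewrite PSeries_plus in H. rewrite PSeries_plus in H. rewrite !PSeries_scal, PSeries_incr_1 in H.
  lra.
  apply ex_pseries_scal. unfold mult; simpl; ring. auto.
  apply ex_pseries_scal. unfold mult; simpl; ring. auto.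
  apply ex_pseries_plus; apply ex_pseries_scal; auto; unfold mult; simpl; ring.
  apply ex_pseries_incr_1; auto.
Qed.

End BIN.

Section ODE.
Variables ca cb : R.
Definition Ef (t : R) := exp (ca * ln (1 - t)) * cos (cb * ln (1 - t)).
Definition Vf (t : R) := exp (ca * ln (1 - t)) * sin (cb * ln (1 - t)).

Lemma Ef_der t : t < 1 -> is_derive Ef t ((- ca * Ef t + cb * Vf t) / (1 - t)).
Proof.
  intros Ht. unfold Ef, Vf. auto_derive. lra. unfold Rminus. field. lra.
Qed.
Lemma Vf_der t : t < 1 -> is_derive Vf t ((- ca * Vf t - cb * Ef t) / (1 - t)).
Proof.
  intros Ht. unfold Ef, Vf. auto_derive. lra. unfold Rminus. field. lra.
Qed.
End ODE.

Lemma is_derive_eq (f : R -> R) x l l' : is_derive f x l -> l = l' -> is_derive f x l'.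
Proof. intros H ->; exact H. Qed.

Lemma is_derive_prod (f g : R -> R) x df dg :
  is_derive f x df -> is_derive g x dg -> is_derive (fun t => f t * g t) x (df * g x + f x * dg).
Proof.
  intros H1 H2. pose proof (is_derive_mult (K := R_AbsRing) f g x df dg H1 H2) as H.
  apply H. intros; unfold mult; simpl; ring.
Qed.
Lemma is_derive_sub (f g : R -> R) x df dg :
  is_derive f x df -> is_derive g x dg -> is_derive (fun t => f t - g t) x (df - dg).
Proof. intros H1 H2. apply (is_derive_minus (K := R_AbsRing) f g x df dg H1 H2). Qed.
Lemma is_derive_add (f g : R -> R) x df dg :
  is_derive f x df -> is_derive g x dg -> is_derive (fun t => f t + g t) x (df + dg).
Proof. intros H1 H2. apply (is_derive_plus (K := R_AbsRing) f g x df dg H1 H2). Qed.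

Section CONST.
Variables ca cb : R.
Definition Pf t := PSeries (gr ca cb) t * Ef ca cb t - PSeries (gi ca cb) t * Vf ca cb t.
Definition Qf t := PSeries (gr ca cb) t * Vf ca cb t + PSeries (gi ca cb) t * Ef ca cb t.

Lemma Pf_der t : Rabs t < 1 -> is_derive Pf t 0.
Proof.
  intros Ht. assert (Ht1 : t < 1) by (apply Rabs_lt_between in Ht; lra).
  assert (H := is_derive_sub _ _ t _ _
     (is_derive_prod _ _ t _ _ (is_derive_PSeries _ t (gr_radius ca cb t Ht)) (Ef_der ca cb t Ht1))
     (is_derive_prod _ _ t _ _ (is_derive_PSeries _ t (gi_radius ca cb t Ht)) (Vf_der ca cb t Ht1))).
  apply is_derive_eq with (1 := H).
  match goal with |- ?a = ?b => change (@eq R a b) end.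
  pose proof (ode_r ca cb t Ht) as H1. pose proof (ode_i ca cb t Ht) as H2.
  set (Dr := PSeries (PS_derive (gr ca cb)) t) in *.
  set (Di := PSeries (PS_derive (gi ca cb)) t) in *.
  assert (Dr = (ca * PSeries (gr ca cb) t - cb * PSeries (gi ca cb) t) / (1 - t)) as ->.
  { rewrite <- H1. field. lra. }
  assert (Di = (cb * PSeries (gr ca cb) t + ca * PSeries (gi ca cb) t) / (1 - t)) as ->.
  { rewrite <- H2. field. lra. }
  field. lra.
Qed.

Lemma Qf_der t : Rabs t < 1 -> is_derive Qf t 0.
Proof.
  intros Ht. assert (Ht1 : t < 1) by (apply Rabs_lt_between in Ht; lra).
  assert (H := is_derive_add _ _ t _ _
     (is_derive_prod _ _ t _ _ (is_derive_PSeries _ t (gr_radius ca cb t Ht)) (Vf_der ca cb t Ht1))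
     (is_derive_prod _ _ t _ _ (is_derive_PSeries _ t (gi_radius ca cb t Ht)) (Ef_der ca cb t Ht1))).
  apply is_derive_eq with (1 := H).
  match goal with |- ?a = ?b => change (@eq R a b) end.
  pose proof (ode_r ca cb t Ht) as H1. pose proof (ode_i ca cb t Ht) as H2.
  set (Dr := PSeries (PS_derive (gr ca cb)) t) in *.
  set (Di := PSeries (PS_derive (gi ca cb)) t) in *.
  assert (Dr = (ca * PSeries (gr ca cb) t - cb * PSeries (gi ca cb) t) / (1 - t)) as ->.
  { rewrite <- H1. field. lra. }
  assert (Di = (cb * PSeries (gr ca cb) t + ca * PSeries (gi ca cb) t) / (1 - t)) as ->.
  { rewrite <- H2. field. lra. }
  field. lra.
Qed.

Lemma PQ_const t1 : 0 < t1 < 1 -> Pf t1 = 1 /\ Qf t1 = 0.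
Proof.
  intros Ht1.
  assert (H0P : Pf 0 = 1).
  { unfold Pf, Ef, Vf. rewrite !PSeries_0. unfold gr, gi; simpl.
    replace (1 - 0) with 1 by ring. rewrite ln_1, !Rmult_0_r, exp_0, cos_0, sin_0. ring. }
  assert (H0Q : Qf 0 = 0).
  { unfold Qf, Ef, Vf. rewrite !PSeries_0. unfold gr, gi; simpl.
    replace (1 - 0) with 1 by ring. rewrite ln_1, !Rmult_0_r, exp_0, cos_0, sin_0. ring. }
  split.
  - rewrite <- H0P. symmetry. apply (eq_is_derive (V := R_NormedModule)).
    intros t Ht. apply Pf_der. apply Rabs_lt_between. lra. lra.
  - rewrite <- H0Q. symmetry. apply (eq_is_derive (V := R_NormedModule)).
    intros t Ht. apply Qf_der. apply Rabs_lt_between. lra. lra.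
Qed.
End CONST.

Lemma BIN_real (ca cb sg : R) : 0 < sg < 1 -> cos (cb * ln sg) = 1 -> sin (cb * ln sg) = 0 ->
  is_series (fun r => gr ca cb r * (1 - sg) ^ r) (/ exp (ca * ln sg)) /\
  is_series (fun r => gi ca cb r * (1 - sg) ^ r) 0.
Proof.
  intros Hs Hc Hsn.
  destruct (PQ_const ca cb (1 - sg)) as [HP HQ]. lra.
  unfold Pf, Qf, Ef, Vf in *. replace (1 - (1 - sg)) with sg in * by ring.
  rewrite Hc, Hsn in *.
  assert (He : 0 < exp (ca * ln sg)) by apply exp_pos.
  assert (Ht : Rabs (1 - sg) < 1) by (rewrite Rabs_pos_eq; lra).
  assert (E1 := PSeries_correct _ _ (CV_radius_inside _ _ (gr_radius ca cb _ Ht))).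
  assert (E2 := PSeries_correct _ _ (CV_radius_inside _ _ (gi_radius ca cb _ Ht))).
  split.
  - replace (/ exp (ca * ln sg)) with (PSeries (gr ca cb) (1 - sg)).
    2:{ apply Rmult_eq_reg_r with (exp (ca * ln sg)). rewrite Rinv_l. lra. lra. lra. }
    revert E1. apply is_series_ext. intros n. rewrite pow_n_pow. unfold scal; simpl; unfold mult; simpl. ring.
  - replace 0 with (PSeries (gi ca cb) (1 - sg)).
    2:{ apply Rmult_eq_reg_r with (exp (ca * ln sg)). lra. lra. }
    revert E2. apply is_series_ext. intros n. rewrite pow_n_pow. unfold scal; simpl; unfold mult; simpl. ring.
Qed.

Lemma Cmod_lt1 (x : C) : fst x ^ 2 + snd x ^ 2 < 1 -> Cmod x < 1.
Proof. intros H. unfold Cmod. rewrite <- sqrt_1. apply sqrt_lt_1_alt. split. nra. exact H. Qed.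
Lemma Cmod_lt1_inv (x : C) : Cmod x < 1 -> fst x ^ 2 + snd x ^ 2 < 1.
Proof. intros H. unfold Cmod in H. rewrite <- sqrt_1 in H. apply sqrt_lt_0_alt in H. exact H. Qed.
Lemma Cmod_gt1 (x : C) : 1 < fst x ^ 2 + snd x ^ 2 -> 1 < Cmod x.
Proof. intros H. unfold Cmod. rewrite <- sqrt_1. apply sqrt_lt_1_alt. split. lra. exact H. Qed.

Lemma s_real (s : C) : 0 < Cmod s -> Cmod s < 1 -> psi_self_map s ->
  snd s = 0 /\ 0 < fst s /\ fst s < 1.
Proof.
  intros H0 H1 Hps. destruct s as [a b]. simpl.
  assert (Hs : (a, b) <> RtoC 0). { intros E. rewrite E, Cmod_0 in H0. lra. }
  assert (Hab : 0 < a ^ 2 + b ^ 2).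
  { destruct (Req_dec a 0); destruct (Req_dec b 0); try nra. subst. exfalso; apply Hs; reflexivity. }
  assert (Hreal : b = 0 /\ 0 < a).
  { apply Classical_Prop.NNPP. intros Hn.
    set (p := a / (a ^ 2 + b ^ 2)). set (q := - b / (a ^ 2 + b ^ 2)).
    assert (Hpq : q <> 0 \/ p < 0).
    { destruct (Req_dec b 0) as [Hb|Hb].
      - right. subst b. assert (a < 0). { destruct (Req_dec a 0). subst. simpl in Hab; lra. nra. }
        unfold p. apply Rdiv_neg_pos; auto.
      - left. unfold q. intros E. unfold Rdiv in E. apply Rmult_integral in E. destruct E as [E|E].
        lra. apply Rinv_neq_0_compat in E; auto. lra. }
    set (k := if Req_EM_T q 0 then 0 else (Rabs p + 1) / q).
    assert (Hd : p - q * k < 0).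
    { unfold k. destruct (Req_EM_T q 0) as [Hq|Hq].
      - destruct Hpq; [contradiction|]. lra.
      - replace (q * ((Rabs p + 1) / q)) with (Rabs p + 1) by (field; auto).
        pose proof (Rle_abs p). lra. }
    set (d := p - q * k) in *.
    assert (HW : 0 < p ^ 2 + q ^ 2).
    { unfold p, q. replace ((a / (a ^ 2 + b ^ 2)) ^ 2 + (- b / (a ^ 2 + b ^ 2)) ^ 2) with (/ (a ^ 2 + b ^ 2)) by (field; lra).
      apply Rinv_0_lt_compat; auto. }
    assert (Hk : 0 < 1 + k ^ 2) by nra.
    set (eps := - d / ((p ^ 2 + q ^ 2) * (1 + k ^ 2))).
    assert (Heps : 0 < eps). { unfold eps. apply Rdiv_pos_pos. lra. nra. }
    set (v := (eps, eps * k) : C).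
    set (z := Cinv (RtoC 1 + v)%C).
    assert (Hv : (RtoC 1 + v)%C <> RtoC 0).
    { intros E. apply (f_equal fst) in E. simpl in E. lra. }
    assert (Hz : Cmod z < 1).
    { assert (Hg : 1 < Cmod (RtoC 1 + v)%C) by (apply Cmod_gt1; simpl; nra).
      unfold z. rewrite Cmod_inv by auto.
      pose proof (Rinv_1_lt_contravar 1 _ (Rle_refl 1) Hg) as HH. rewrite Rinv_1 in HH. exact HH. }
    destruct (Hps z Hz) as [Hden Hpsi].
    set (w := ((p, q) : C)).
    assert (Hw : w = Cinv (a, b)). { unfold w, p, q, Cinv. simpl. f_equal; field; lra. }
    assert (Hprod : Cmult (psi (a, b) z) (RtoC 1 + w * v)%C = RtoC 1).
    { assert (Hvs : (v + (a, b))%C <> RtoC 0).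
      { intros E. apply Hden.
        replace (RtoC 1 - (RtoC 1 - (a, b)) * z)%C with ((v + (a, b)) / (RtoC 1 + v))%C.
        rewrite E. field. auto. unfold z. field. auto. }
      unfold psi. rewrite Hw. unfold z. unfold z in Hden.
      field. split; [auto|split; [exact Hv| intros E; apply Hvs; rewrite <- E; ring]]. }
    assert (Hu : Cmod (RtoC 1 + w * v)%C < 1).
    { apply Cmod_lt1. unfold w, v. simpl.
      match goal with |- ?L < 1 => assert (EL : L = 1 + 2 * eps * d + eps ^ 2 * ((p ^ 2 + q ^ 2) * (1 + k ^ 2))) by (unfold d; ring) end.
      rewrite EL.
      replace (eps ^ 2 * ((p ^ 2 + q ^ 2) * (1 + k ^ 2))) with (- eps * d) by (unfold eps; field; lra).
      nra. }
    apply (f_equal Cmod) in Hprod. rewrite Cmod_mult, Cmod_1 in Hprod.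
    pose proof (Cmod_ge_0 (psi (a, b) z)). pose proof (Cmod_ge_0 (RtoC 1 + w * v)%C). nra. }
  destruct Hreal as [Hb Ha]. subst b. split; auto. split; auto.
  unfold Cmod in H1. simpl in H1. replace (a * (a * 1) + 0 * (0 * 1)) with (a * a) in H1 by ring.
  rewrite sqrt_square in H1 by lra. exact H1.
Qed.

Fixpoint ee (n r : nat) : R :=
  match r with O => 1 | S r' => ee n r' * ((INR n + INR r') / (INR r' + 1)) end.

Lemma ee_S n r : ee n (S r) = ee n r * ((INR n + INR r) / (INR r + 1)).
Proof. reflexivity. Qed.
Lemma ee_0 n : ee n 0 = 1.
Proof. reflexivity. Qed.

Lemma ee_nonneg n r : 0 <= ee n r.
Proof. induction r; simpl. lra. pose proof (pos_INR n); pose proof (pos_INR r).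
  apply Rmult_le_pos; auto. apply Rdiv_le_0_compat; lra. Qed.

Lemma ee_A n r : INR n * ee (S n) r = ee n r * (INR n + INR r).
Proof.
  induction r. rewrite !ee_0. simpl. ring.
  rewrite !ee_S, S_INR, S_INR. pose proof (pos_INR r).
  replace (INR n * (ee (S n) r * ((INR n + 1 + INR r) / (INR r + 1))))
    with ((INR n * ee (S n) r) * ((INR n + 1 + INR r) / (INR r + 1))) by ring.
  rewrite IHr. field. lra.
Qed.

Lemma ee_pascal n r : ee (S n) (S r) = ee (S n) r + ee n (S r).
Proof.
  rewrite !ee_S, S_INR. pose proof (pos_INR r). pose proof (ee_A n r) as HA.
  replace (ee n r * ((INR n + INR r) / (INR r + 1))) with ((ee n r * (INR n + INR r)) / (INR r + 1)) by (field; lra).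
  rewrite <- HA. field. lra.
Qed.

Lemma ee_0_S r : ee 0 (S r) = 0.
Proof. induction r. rewrite ee_S, ee_0. simpl. field. rewrite ee_S, IHr. ring. Qed.

Definition Mc (sg : R) (j n : nat) : R :=
  if (n <=? j)%nat then sg ^ n * (1 - sg) ^ (j - n) * ee n (j - n) else 0.

Lemma Mc_zero sg j n : (j < n)%nat -> Mc sg j n = 0.
Proof. intros H. unfold Mc. destruct (Nat.leb_spec n j). lia. auto. Qed.

Lemma Mc_00 sg : Mc sg 0 0 = 1.
Proof. unfold Mc. simpl. ring. Qed.

Lemma Mc_S0 sg j : Mc sg (S j) 0 = 0.
Proof. unfold Mc. simpl Nat.leb. replace (S j - 0)%nat with (S j) by lia. rewrite ee_0_S. ring. Qed.

Lemma Mc_j0 sg j : Mc sg j 0 = if Nat.eqb j 0 then 1 else 0.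
Proof. destruct j. apply Mc_00. apply Mc_S0. Qed.

Lemma Mc_rec sg j n : Mc sg (S j) (S n) = (1 - sg) * Mc sg j (S n) + sg * Mc sg j n.
Proof.
  unfold Mc. destruct (Nat.leb_spec (S n) (S j)); destruct (Nat.leb_spec (S n) j); destruct (Nat.leb_spec n j); try lia.
  - replace (S j - S n)%nat with (S (j - S n)) by lia.
    replace (j - n)%nat with (S (j - S n)) by lia.
    rewrite ee_pascal. simpl. ring.
  - assert (n = j) by lia. subst. rewrite !Nat.sub_diag, !ee_0. simpl. ring.
  - ring.
Qed.

Lemma Mc_nonneg sg j n : 0 < sg < 1 -> 0 <= Mc sg j n.
Proof.
  intros Hs. unfold Mc. destruct (n <=? j)%nat. 2: lra.
  apply Rmult_le_pos. apply Rmult_le_pos; apply pow_le; lra. apply ee_nonneg.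
Qed.

Lemma sum_scal_l (c : R) (f : nat -> R) N : sum_f_R0 (fun i => c * f i) N = c * sum_f_R0 f N.
Proof. induction N. simpl. ring. rewrite !tech5, IHN. ring. Qed.

Lemma Mc_rowsum sg j : sum_f_R0 (Mc sg j) j = if Nat.eqb j 0 then 1 else sg.
Proof.
  induction j.
  - simpl. apply Mc_00.
  - rewrite decomp_sum by lia. simpl pred. rewrite Mc_S0.
    rewrite (sum_eq _ (fun i => (1 - sg) * Mc sg j (S i) + sg * Mc sg j i)) by (intros; apply Mc_rec).
    rewrite plus_sum. rewrite !sum_scal_l.
    assert (E : sum_f_R0 (fun i => Mc sg j (S i)) j = sum_f_R0 (Mc sg j) j - Mc sg j 0).
    { destruct j. simpl. rewrite Mc_zero by lia. ring.
      rewrite tech5. rewrite (Mc_zero sg (S j) (S (S j))) by lia.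
      rewrite (decomp_sum (Mc sg (S j)) (S j)) by lia. simpl pred. ring. }
    rewrite E, IHj.
    rewrite Mc_j0. destruct (Nat.eqb j 0); simpl; ring.
Qed.

Lemma Mc_rowsum_le sg j : 0 < sg < 1 -> sum_f_R0 (Mc sg j) j <= 1.
Proof. intros Hs. rewrite Mc_rowsum. destruct (Nat.eqb j 0); lra. Qed.

Lemma sum_term_le (f : nat -> R) N n : (forall k, 0 <= f k) -> (n <= N)%nat -> f n <= sum_f_R0 f N.
Proof.
  intros Hf Hn. induction N. assert (n = 0)%nat by lia. subst. simpl. lra.
  rewrite tech5. destruct (Nat.eq_dec n (S N)). subst.
  pose proof (cond_pos_sum f N Hf). lra.
  specialize (IHN ltac:(lia)). pose proof (Hf (S N)). lra.
Qed.

Lemma Mc_le1 sg j n : 0 < sg < 1 -> Mc sg j n <= 1.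
Proof.
  intros Hs. destruct (Nat.leb_spec n j).
  - apply Rle_trans with (sum_f_R0 (Mc sg j) j). 2: apply Mc_rowsum_le; auto.
    apply sum_term_le; auto. intros; apply Mc_nonneg; auto.
  - rewrite Mc_zero by lia. lra.
Qed.

Lemma is_series_lim (a : nat -> R) (l : R) : is_series a l <-> is_lim_seq (sum_n a) l.
Proof. split; intros H; exact H. Qed.

Lemma sum_mono (f : nat -> R) J K : (forall k, 0 <= f k) -> (J <= K)%nat -> sum_f_R0 f J <= sum_f_R0 f K.
Proof.
  intros Hf HJK. induction HJK. lra. rewrite tech5. pose proof (Hf (S m)). lra.
Qed.

Lemma swap_tri (u : nat -> nat -> R) J : (forall j n, (j < n)%nat -> u j n = 0) ->
  sum_f_R0 (fun j => sum_f_R0 (u j) j) J = sum_f_R0 (fun n => sum_f_R0 (fun j => u j n) J) J.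
Proof.
  intros Hz. induction J.
  - simpl. reflexivity.
  - rewrite tech5, IHJ. rewrite tech5.
    rewrite (sum_eq (fun n => sum_f_R0 (fun j => u j n) (S J)) (fun n => sum_f_R0 (fun j => u j n) J + u (S J) n))
      by (intros; apply tech5).
    rewrite plus_sum.
    assert (sum_f_R0 (fun j => u j (S J)) J = 0).
    { rewrite (sum_eq _ (fun _ => 0)). clear. induction J; simpl; lra. intros i Hi. apply Hz. lia. }
    rewrite tech5. rewrite H. rewrite tech5. ring.
Qed.

Lemma is_series_sum_f (v : nat -> nat -> R) (L : nat -> R) J :
  (forall n, is_series (fun i => v i n) (L n)) ->
  is_series (fun i => sum_f_R0 (v i) J) (sum_f_R0 L J).
Proof.
  intros H. induction J.
  - simpl. apply H.
  - simpl. apply (is_series_plus (V := R_NormedModule)); auto.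
Qed.

Lemma series_abs_le (a b : nat -> R) (la lb : R) :
  is_series a la -> is_series b lb -> (forall n, Rabs (a n) <= b n) -> Rabs la <= lb.
Proof.
  intros Ha Hb Hab.
  assert (Eb : ex_series b) by (exists lb; auto).
  assert (Ea : ex_series (fun n => Rabs (a n))).
  { apply (ex_series_le (V := R_CompleteNormedModule)) with b; auto. intros n. unfold norm; simpl.
    unfold abs; simpl. rewrite Rabs_Rabsolu. auto. }
  apply is_series_unique in Ha. apply is_series_unique in Hb. subst.
  eapply Rle_trans. apply Series_Rabs; auto. apply Series_le; auto.
  intros n; split; auto. apply Rabs_pos.
Qed.

Lemma fubini_tri (u : nat -> nat -> R) (T : nat -> R) (l : R) :
  (forall j n, (j < n)%nat -> u j n = 0) ->
  ex_series (fun j => sum_f_R0 (fun n => Rabs (u j n)) j) ->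
  (forall n, is_series (fun j => u j n) (T n)) ->
  is_series (fun j => sum_f_R0 (u j) j) l ->
  is_series T l.
Proof.
  intros Hz HR HT Hl.
  set (Rw := fun j => sum_f_R0 (fun n => Rabs (u j n)) j) in *.
  set (tail := fun J => Series (fun i => Rw (S J + i)%nat)).
  set (err := fun J => sum_f_R0 (fun n => Series (fun i => u (S J + i)%nat n)) J).
  assert (Hdec : forall J, sum_f_R0 T J = sum_f_R0 (fun j => sum_f_R0 (u j) j) J + err J).
  { intros J. rewrite swap_tri by auto. unfold err. rewrite <- plus_sum. apply sum_eq. intros n _.
    rewrite <- (is_series_unique _ _ (HT n)).
    rewrite (Series_incr_n (fun j => u j n) (S J)) by (lia || (exists (T n); auto)).
    simpl pred. reflexivity. }
  assert (Herr : forall J, Rabs (err J) <= tail J).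
  { intros J. unfold err, tail.
    apply series_abs_le with (fun i => sum_f_R0 (fun n => u (S J + i)%nat n) J) (fun i => Rw (S J + i)%nat).
    - apply is_series_sum_f with (v := fun i n => u (S J + i)%nat n). intros n.
      apply Series_correct. apply (ex_series_incr_n (fun j => u j n) (S J)). exists (T n); auto.
    - apply Series_correct. apply (ex_series_incr_n Rw (S J)). auto.
    - intros i. eapply Rle_trans. apply Rsum_abs. unfold Rw.
      apply sum_mono. intros; apply Rabs_pos. lia. }
  assert (Htail : is_lim_seq tail 0).
  { destruct HR as [SR HSR].
    apply is_lim_seq_ext with (fun J => SR - sum_f_R0 Rw J).
    { intros J. unfold tail. rewrite <- (is_series_unique _ _ HSR).
      rewrite (Series_incr_n Rw (S J)) by (lia || (exists SR; auto)). simpl pred. ring. }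
    replace (Finite 0) with (Finite (SR - SR)) by (f_equal; ring).
    apply is_lim_seq_minus'. apply is_lim_seq_const.
    apply is_lim_seq_ext with (sum_n Rw). intros; apply sum_n_Reals. exact HSR. }
  apply is_series_lim.
  apply is_lim_seq_ext with (fun J => sum_f_R0 (fun j => sum_f_R0 (u j) j) J + err J).
  { intros J. rewrite sum_n_Reals. auto. }
  replace l with (l + 0) by ring.
  apply is_lim_seq_plus'.
  - apply is_lim_seq_ext with (sum_n (fun j => sum_f_R0 (u j) j)). intros; apply sum_n_Reals. exact Hl.
  - apply is_lim_seq_le_le with (fun J => - tail J) tail.
    + intros J. pose proof (Herr J) as H. apply Rabs_le_between in H. lra.
    + replace (Finite 0) with (Finite (- 0)) by (f_equal; ring). apply is_lim_seq_opp in Htail. exact Htail.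
    + exact Htail.
Qed.

Lemma sum_n_Re (a : nat -> C) N : Re (sum_n a N) = sum_n (fun n => Re (a n)) N.
Proof. induction N. rewrite !sum_O; auto. rewrite !sum_Sn. rewrite <- IHN. reflexivity. Qed.
Lemma sum_n_Im (a : nat -> C) N : Im (sum_n a N) = sum_n (fun n => Im (a n)) N.
Proof. induction N. rewrite !sum_O; auto. rewrite !sum_Sn. rewrite <- IHN. reflexivity. Qed.

Lemma is_series_C_split (a : nat -> C) (l : C) :
  is_series (V := C_NormedModule) a l <->
  is_series (fun n => Re (a n)) (Re l) /\ is_series (fun n => Im (a n)) (Im l).
Proof.
  unfold is_series. split.
  - intros H. split; apply filterlim_locally; intros eps;
    destruct (proj1 (filterlim_locally _ _) H eps) as [N HN]; exists N; intros n Hn;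
    specialize (HN n Hn); destruct HN as [H1 H2].
    + change (ball (Re l) eps (sum_n (fun n => Re (a n)) n)). rewrite <- sum_n_Re. exact H1.
    + change (ball (Im l) eps (sum_n (fun n => Im (a n)) n)). rewrite <- sum_n_Im. exact H2.
  - intros [H1 H2]. apply filterlim_locally. intros eps.
    destruct (proj1 (filterlim_locally _ _) H1 eps) as [N1 HN1].
    destruct (proj1 (filterlim_locally _ _) H2 eps) as [N2 HN2].
    exists (max N1 N2). intros n Hn. split.
    + change (ball (Re l) eps (Re (sum_n a n))). rewrite sum_n_Re. apply HN1. lia.
    + change (ball (Im l) eps (Im (sum_n a n))). rewrite sum_n_Im. apply HN2. lia.
Qed.

Lemma is_series_C_unique (a : nat -> C) l1 l2 :
  is_series (V := C_NormedModule) a l1 -> is_series (V := C_NormedModule) a l2 -> l1 = l2.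
Proof.
  intros H1 H2. apply is_series_C_split in H1. apply is_series_C_split in H2.
  destruct H1 as [A1 B1]. destruct H2 as [A2 B2].
  apply is_series_unique in A1. apply is_series_unique in A2.
  apply is_series_unique in B1. apply is_series_unique in B2.
  destruct l1, l2. simpl in *. f_equal; congruence.
Qed.

Lemma Cmod_le_ReIm (x : C) : Cmod x <= Rabs (Re x) + Rabs (Im x).
Proof.
  unfold Cmod. apply Rsqr_incr_0_var. rewrite Rsqr_sqrt.
  unfold Rsqr. destruct x as [a b]; simpl.
  pose proof (Rabs_pos a); pose proof (Rabs_pos b).
  replace (a * (a * 1) + b * (b * 1)) with (Rabs a * Rabs a + Rabs b * Rabs b).
  nra. rewrite <- !Rabs_mult. rewrite !Rabs_pos_eq by nra. ring.
  nra. pose proof (Rabs_pos (Re x)); pose proof (Rabs_pos (Im x)). lra.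
Qed.

Lemma Im_le_Cmod (x : C) : Rabs (Im x) <= Cmod x.
Proof.
  unfold Cmod. destruct x as [a b]; simpl. rewrite <- sqrt_Rsqr_abs. apply sqrt_le_1_alt.
  unfold Rsqr. nra.
Qed.

Lemma Cmod_pow_n (z : C) n : Cmod (pow_n z n) = Cmod z ^ n.
Proof. induction n. simpl. apply Cmod_1. simpl. change (Cmod (Cmult z (pow_n z n)) = Cmod z * Cmod z ^ n).
  rewrite Cmod_mult, IHn. reflexivity. Qed.

Lemma pow_n_RtoC (x : R) n : pow_n (RtoC x) n = RtoC (x ^ n).
Proof. induction n. reflexivity. simpl. change (Cmult (RtoC x) (pow_n (RtoC x) n) = RtoC (x * x ^ n)).
  rewrite IHn. unfold Cmult, RtoC; simpl. f_equal; ring. Qed.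

Lemma Cmod_sum_n (f : nat -> C) N : Cmod (sum_n f N) <= sum_f_R0 (fun n => Cmod (f n)) N.
Proof.
  induction N. rewrite sum_O. simpl. lra.
  rewrite sum_Sn, tech5. change (Cmod (Cplus (sum_n f N) (f (S N))) <= sum_f_R0 (fun n => Cmod (f n)) N + Cmod (f (S N))).
  eapply Rle_trans. apply Cmod_triangle. lra.
Qed.

Lemma sum_n_mult_r (f : nat -> C) (c : C) N : sum_n (fun n => Cmult (f n) c) N = Cmult (sum_n f N) c.
Proof.
  induction N. rewrite !sum_O. reflexivity.
  rewrite !sum_Sn, IHN. change (Cplus (Cmult (sum_n f N) c) (Cmult (f (S N)) c) = Cmult (Cplus (sum_n f N) (f (S N))) c).
  ring.
Qed.

Lemma ex_series_C_abs (a : nat -> C) (b : nat -> R) :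
  (forall n, Cmod (a n) <= b n) -> ex_series b -> ex_series (V := C_NormedModule) a.
Proof.
  intros H Hb. apply (ex_series_le (V := C_CompleteNormedModule) a b); auto.
Qed.

Lemma is_series_finite {K : AbsRing} {V : NormedModule K} (u : nat -> V) (M : nat) :
  (forall j, (M < j)%nat -> u j = zero) -> is_series u (sum_n u M).
Proof.
  intros Hu. unfold is_series. apply filterlim_ext_loc with (fun _ => sum_n u M).
  - exists M. intros n Hn. induction Hn. reflexivity. rewrite sum_Sn, <- IHHn, Hu. rewrite plus_zero_r. auto. lia.
  - apply filterlim_const.
Qed.

Lemma fubini_C (u : nat -> nat -> C) (T : nat -> C) (l : C) :
  (forall j n, (j < n)%nat -> u j n = RtoC 0) ->
  ex_series (fun j => sum_f_R0 (fun n => Cmod (u j n)) j) ->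
  (forall n, is_series (V := C_NormedModule) (fun j => u j n) (T n)) ->
  is_series (V := C_NormedModule) (fun j => sum_n (u j) j) l ->
  is_series (V := C_NormedModule) T l.
Proof.
  intros Hz HR HT Hl. apply is_series_C_split. apply is_series_C_split in Hl. destruct Hl as [Hl1 Hl2].
  split.
  - apply fubini_tri with (u := fun j n => Re (u j n)).
    + intros j n H. rewrite Hz; auto.
    + apply (ex_series_le (V := R_CompleteNormedModule)) with (2 := HR). intros j.
      unfold norm; simpl; unfold abs; simpl. rewrite Rabs_pos_eq by (apply cond_pos_sum; intros; apply Rabs_pos).
      apply sum_growing. intros n. apply re_le_Cmod.
    + intros n. apply is_series_C_split, HT.
    + revert Hl1. apply is_series_ext. intros j. rewrite sum_n_Re, sum_n_Reals. reflexivity.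
  - apply fubini_tri with (u := fun j n => Im (u j n)).
    + intros j n H. rewrite Hz; auto.
    + apply (ex_series_le (V := R_CompleteNormedModule)) with (2 := HR). intros j.
      unfold norm; simpl; unfold abs; simpl. rewrite Rabs_pos_eq by (apply cond_pos_sum; intros; apply Rabs_pos).
      apply sum_growing. intros n. apply Im_le_Cmod.
    + intros n. apply is_series_C_split, HT.
    + revert Hl2. apply is_series_ext. intros j. rewrite sum_n_Im, sum_n_Reals. reflexivity.
Qed.

Definition Poly (K : R) (N : nat) (a : nat -> C) := forall n, Cmod (a n) <= K * (INR n + 1) ^ N.

Definition CT (sg : R) (a : nat -> C) (j : nat) : C :=
  sum_n (fun n => Cmult (RtoC (Mc sg j n)) (a n)) j.

Lemma Poly_K_nonneg K N a : Poly K N a -> 0 <= K.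
Proof. intros H. specialize (H 0%nat). replace (INR 0 + 1) with 1 in H by (simpl; ring). rewrite pow1 in H. pose proof (Cmod_ge_0 (a 0%nat)). lra. Qed.

Lemma CT_poly sg K N a : 0 < sg < 1 -> Poly K N a -> Poly K N (CT sg a).
Proof.
  intros Hs Ha j. unfold CT. eapply Rle_trans. apply Cmod_sum_n.
  pose proof (Poly_K_nonneg _ _ _ Ha) as HK.
  apply Rle_trans with (sum_f_R0 (fun n => Mc sg j n * (K * (INR j + 1) ^ N)) j).
  - apply sum_Rle. intros n Hn. rewrite Cmod_mult, Cmod_R, Rabs_pos_eq by (apply Mc_nonneg; auto).
    apply Rmult_le_compat_l. apply Mc_nonneg; auto. eapply Rle_trans. apply Ha.
    apply Rmult_le_compat_l; auto. apply pow_incr. split. pose proof (pos_INR n); lra.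
    apply le_INR in Hn. lra.
  - rewrite <- scal_sum. rewrite Rmult_comm.
    pose proof (Mc_rowsum_le sg j Hs). pose proof (cond_pos_sum (Mc sg j) j (fun k => Mc_nonneg sg j k Hs)).
    assert (0 <= K * (INR j + 1) ^ N). { apply Rmult_le_pos; auto. apply pow_le. pose proof (pos_INR j); lra. }
    nra.
Qed.

Lemma psi_pow_series sg z n : 0 < sg < 1 -> Cmod z < 1 ->
  is_series (V := C_NormedModule) (fun j => Cmult (RtoC (Mc sg j n)) (pow_n z j)) (pow_n (psi (RtoC sg) z) n).
Proof.
  intros Hs Hz.
  assert (Hd : Cminus (RtoC 1) (Cmult (Cminus (RtoC 1) (RtoC sg)) z) <> RtoC 0).
  { intros E. assert (E2 : Cmult (Cminus (RtoC 1) (RtoC sg)) z = RtoC 1).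
    { replace (Cmult (Cminus (RtoC 1) (RtoC sg)) z) with (Cminus (RtoC 1) (Cminus (RtoC 1) (Cmult (Cminus (RtoC 1) (RtoC sg)) z))) by ring.
      rewrite E. ring. }
    apply (f_equal Cmod) in E2. rewrite Cmod_mult, Cmod_1 in E2.
    replace (Cminus (RtoC 1) (RtoC sg)) with (RtoC (1 - sg)) in E2 by (unfold RtoC, Cminus, Cplus, Copp; simpl; f_equal; ring).
    rewrite Cmod_R, Rabs_pos_eq in E2 by lra. pose proof (Cmod_ge_0 z). nra. }
  induction n.
  - replace (pow_n (psi (RtoC sg) z) 0) with (sum_n (fun j => Cmult (RtoC (Mc sg j 0)) (pow_n z j)) 0).
    apply (is_series_finite (K := C_AbsRing) (V := C_NormedModule)). intros j Hj. destruct j. lia. rewrite Mc_S0. unfold zero; simpl. ring.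
    rewrite sum_O. rewrite Mc_00. simpl. change (Cmult (RtoC 1) (RtoC 1) = RtoC 1). ring.
  - set (u := fun j => Cmult (RtoC (Mc sg j (S n))) (pow_n z j)).
    assert (Ex : ex_series (V := C_NormedModule) u).
    { apply ex_series_C_abs with (fun j => Cmod z ^ j).
      intros j. unfold u. rewrite Cmod_mult, Cmod_R, Cmod_pow_n, Rabs_pos_eq by (apply Mc_nonneg; auto).
      pose proof (Mc_le1 sg j (S n) Hs). pose proof (pow_le (Cmod z) j (Cmod_ge_0 z)). nra.
      apply ex_series_geom. rewrite Rabs_pos_eq; auto. apply Cmod_ge_0. }
    destruct Ex as [L0 HL0]. pose (L := (L0 : C)). assert (HL : is_series (V := C_NormedModule) u L) by exact HL0. clearbody L. clear HL0.
    assert (H1 : is_series (V := C_NormedModule) (fun j => u (S j)) L).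
    { assert (E : plus L (u 0%nat) = L).
      { unfold u. rewrite Mc_zero by lia. change (@eq C (Cplus L (Cmult (RtoC 0) (pow_n z 0))) L). rewrite Cmult_0_l, Cplus_0_r. reflexivity. }
      rewrite <- E in HL. exact (is_series_incr_1 u L HL). }
    set (c1 := Cmult (RtoC (1 - sg)) z). set (c2 := Cmult (RtoC sg) z).
    set (F := pow_n (psi (RtoC sg) z) n) in *.
    pose proof (is_series_plus _ _ _ _ (is_series_scal (V := C_NormedModule) c1 _ _ HL)
                  (is_series_scal (V := C_NormedModule) c2 _ _ IHn)) as H2.
    assert (H2' : is_series (V := C_NormedModule) (fun j => u (S j)) (Cplus (Cmult c1 L) (Cmult c2 F))).
    { revert H2. apply is_series_ext. intros j. unfold u. rewrite Mc_rec.
      change (Cplus (Cmult c1 (Cmult (RtoC (Mc sg j (S n))) (pow_n z j)))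
                    (Cmult c2 (Cmult (RtoC (Mc sg j n)) (pow_n z j))) =
              Cmult (RtoC ((1 - sg) * Mc sg j (S n) + sg * Mc sg j n)) (Cmult z (pow_n z j))).
      unfold c1, c2. match goal with |- ?a = ?b => change (@eq C a b) end. rewrite RtoC_plus, !RtoC_mult. ring. }
    pose proof (is_series_C_unique _ _ _ H1 H2') as EL.
    set (D := Cminus (RtoC 1) (Cmult (Cminus (RtoC 1) (RtoC sg)) z)) in *.
    assert (ELD : @eq C (Cmult L D) (Cmult c2 F)).
    { assert (Hc1 : c1 = Cmult (Cminus (RtoC 1) (RtoC sg)) z).
      { unfold c1. rewrite RtoC_minus. reflexivity. }
      unfold D. rewrite <- Hc1. change (@eq C L (Cplus (Cmult c1 L) (Cmult c2 F))) in EL.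
      transitivity (Cminus L (Cmult c1 L)). ring. rewrite EL at 1. ring. }
    assert (EL2 : @eq C L (Cmult (psi (RtoC sg) z) F)).
    { transitivity (Cdiv (Cmult L D) D). field. auto.
      rewrite ELD. unfold psi, c2. fold D. field. auto. }
    rewrite EL2 in HL. exact HL.
Qed.

Lemma comp_coeffs sg h a K N : 0 < sg < 1 -> psi_self_map (RtoC sg) -> has_coeffs h a -> Poly K N a ->
  has_coeffs (comp_op (psi (RtoC sg)) h) (CT sg a).
Proof.
  intros Hs Hps Hh Ha z Hz.
  destruct (Hps z Hz) as [_ Hw]. set (w := psi (RtoC sg) z) in *.
  pose proof (Poly_K_nonneg _ _ _ Ha) as HK.
  set (u := fun j n => Cmult (Cmult (RtoC (Mc sg j n)) (a n)) (pow_n z j)).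
  assert (Hrow : forall j, sum_f_R0 (fun n => Cmod (u j n)) j <= K * (INR j + 1) ^ N * Cmod z ^ j).
  { intros j. unfold u.
    apply Rle_trans with (sum_f_R0 (fun n => Mc sg j n * (K * (INR j + 1) ^ N * Cmod z ^ j)) j).
    - apply sum_Rle. intros n Hn. rewrite !Cmod_mult, Cmod_R, Cmod_pow_n, Rabs_pos_eq by (apply Mc_nonneg; auto).
      rewrite Rmult_assoc. apply Rmult_le_compat_l. apply Mc_nonneg; auto.
      apply Rmult_le_compat_r. apply pow_le, Cmod_ge_0. eapply Rle_trans. apply Ha.
      apply Rmult_le_compat_l; auto. apply pow_incr. split. pose proof (pos_INR n); lra.
      apply le_INR in Hn. lra.
    - rewrite <- scal_sum. rewrite Rmult_comm.
      pose proof (Mc_rowsum_le sg j Hs). pose proof (cond_pos_sum (Mc sg j) j (fun k => Mc_nonneg sg j k Hs)).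
      assert (0 <= K * (INR j + 1) ^ N * Cmod z ^ j).
      { apply Rmult_le_pos. apply Rmult_le_pos; auto. apply pow_le. pose proof (pos_INR j); lra. apply pow_le, Cmod_ge_0. }
      nra. }
  assert (Hgeom : ex_series (fun j => K * (INR j + 1) ^ N * Cmod z ^ j)).
  { apply poly_geom_ex. split. apply Cmod_ge_0. auto. }
  assert (Hrowsum : forall j, sum_n (u j) j = Cmult (CT sg a j) (pow_n z j)).
  { intros j. unfold u, CT. apply sum_n_mult_r. }
  assert (Ex : ex_series (V := C_NormedModule) (fun j => Cmult (CT sg a j) (pow_n z j))).
  { apply ex_series_C_abs with (2 := Hgeom). intros j. rewrite <- Hrowsum.
    eapply Rle_trans. apply Cmod_sum_n. apply Hrow. }
  destruct Ex as [L0 HL0]. pose (L := (L0 : C)).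
  assert (HL : is_series (V := C_NormedModule) (fun j => Cmult (CT sg a j) (pow_n z j)) L) by exact HL0.
  clearbody L. clear HL0.
  assert (HT : is_series (V := C_NormedModule) (fun n => Cmult (a n) (pow_n w n)) L).
  { apply fubini_C with u.
    - intros j n Hjn. unfold u. rewrite Mc_zero by auto. rewrite !Cmult_0_l. reflexivity.
    - apply (ex_series_le (V := R_CompleteNormedModule)) with (2 := Hgeom). intros j.
      unfold norm; simpl; unfold abs; simpl. rewrite Rabs_pos_eq by (apply cond_pos_sum; intros; apply Cmod_ge_0).
      apply Hrow.
    - intros n. pose proof (is_series_scal (V := C_NormedModule) (a n) _ _ (psi_pow_series sg z n Hs Hz)) as H.
      revert H. apply is_series_ext. intros j. unfold u.
      change (Cmult (a n) (Cmult (RtoC (Mc sg j n)) (pow_n z j)) = Cmult (Cmult (RtoC (Mc sg j n)) (a n)) (pow_n z j)).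
      ring.
    - revert HL. apply is_series_ext. intros j. rewrite Hrowsum. reflexivity. }
  pose proof (is_series_C_unique _ _ _ HT (Hh w Hw)) as E.
  unfold comp_op. fold w. rewrite <- E. exact HL.
Qed.

Fixpoint lam (al : C) (n : nat) : C :=
  match n with
  | O => RtoC 0
  | S n' => match n' with
            | O => RtoC 1
            | S _ => Cmult (lam al n') (Cdiv (Cminus (RtoC (INR n')) al) (RtoC (INR n')))
            end
  end.

Lemma lam_S al k : (1 <= k)%nat -> lam al (S k) = Cmult (lam al k) (Cdiv (Cminus (RtoC (INR k)) al) (RtoC (INR k))).
Proof. intros H. destruct k. lia. reflexivity. Qed.

Lemma gp_S_C ca cb r : (gp ca cb (S r) : C) = Cmult (Cmult (gp ca cb r) (ca + INR r, cb)) (RtoC (/ (INR r + 1))).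
Proof.
  simpl gp. destruct (gp ca cb r) as [x y]. unfold Cmult, RtoC. simpl. pose proof (pos_INR r).
  f_equal; field; lra.
Qed.

Lemma lam_ee (al : C) n r : (1 <= n)%nat ->
  Cmult (lam al (n + r)) (RtoC (ee n r)) = Cmult (lam al n) (gp (INR n - fst al) (- snd al) r).
Proof.
  intros Hn. induction r.
  - rewrite Nat.add_0_r. simpl. change (Cmult (lam al n) (RtoC 1) = Cmult (lam al n) (RtoC 1)). reflexivity.
  - replace (n + S r)%nat with (S (n + r)) by lia. rewrite lam_S by lia. rewrite ee_S, gp_S_C.
    assert (Hnr : 0 < INR (n + r)). { apply lt_0_INR. lia. }
    pose proof (pos_INR r).
    transitivity (Cmult (Cmult (lam al (n + r)) (RtoC (ee n r)))
                   (Cmult (Cminus (RtoC (INR (n + r))) al) (RtoC (/ (INR r + 1))))).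
    + rewrite plus_INR in *. rewrite RtoC_mult.
      rewrite (RtoC_div (INR n + INR r) (INR r + 1)) by lra.
      rewrite (RtoC_inv (INR r + 1)) by lra.
      rewrite !RtoC_plus.
      match goal with |- ?x = ?y => change (@eq C x y) end.
      field. split.
      * intros E. change (RtoC (INR r) + RtoC 1 = RtoC 0)%C in E. rewrite <- RtoC_plus in E. apply RtoC_inj in E. lra.
      * intros E. rewrite <- RtoC_plus in E. apply RtoC_inj in E. lra.
    + rewrite IHr. destruct al as [a b]. simpl fst; simpl snd.
      replace (Cminus (RtoC (INR (n + r))) (a, b)) with ((INR n - a + INR r, - b) : C).
      ring. unfold Cminus, Cplus, Copp, RtoC. simpl. rewrite plus_INR. f_equal; ring.
Qed.

Lemma BIN_C (ca cb sg : R) : 0 < sg < 1 -> cos (cb * ln sg) = 1 -> sin (cb * ln sg) = 0 ->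
  is_series (V := C_NormedModule) (fun r => Cmult (gp ca cb r) (RtoC ((1 - sg) ^ r))) (RtoC (/ exp (ca * ln sg))).
Proof.
  intros Hs Hc Hsn. destruct (BIN_real ca cb sg Hs Hc Hsn) as [H1 H2].
  apply is_series_C_split. split.
  - revert H1. apply is_series_ext. intros r. unfold gr. destruct (gp ca cb r) as [x y]. simpl. ring.
  - revert H2. apply is_series_ext. intros r. unfold gi. destruct (gp ca cb r) as [x y]. simpl. ring.
Qed.

Lemma sum_n_zero_C (a : nat -> C) M : (forall j, (j <= M)%nat -> a j = RtoC 0) -> sum_n a M = RtoC 0.
Proof.
  intros H. induction M. rewrite sum_O. apply H. lia.
  rewrite sum_Sn, IHM. rewrite H by lia. change (Cplus (RtoC 0) (RtoC 0) = RtoC 0). ring. intros; apply H; lia.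
Qed.

Lemma exp_ln_pow (sg : R) (k : nat) : 0 < sg -> exp (INR k * ln sg) = sg ^ k.
Proof. intros H. rewrite <- ln_pow by auto. apply exp_ln. apply pow_lt; auto. Qed.

Lemma col_eigen (sg B : R) (m n : nat) : 0 < sg < 1 -> cos (B * ln sg) = 1 -> sin (B * ln sg) = 0 ->
  is_series (V := C_NormedModule) (fun j => Cmult (lam (INR m, B) j) (RtoC (Mc sg j n)))
    (Cmult (RtoC (sg ^ m)) (lam (INR m, B) n)).
Proof.
  intros Hs Hc Hsn. set (al := (INR m, B) : C).
  destruct n.
  - replace (Cmult (RtoC (sg ^ m)) (lam al 0)) with (sum_n (fun j => Cmult (lam al j) (RtoC (Mc sg j 0))) 0).
    apply (is_series_finite (K := C_AbsRing) (V := C_NormedModule)). intros j Hj. destruct j. lia.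
    rewrite Mc_S0. change (Cmult (lam al (S j)) (RtoC 0) = RtoC 0). ring.
    rewrite sum_O. simpl. change (Cmult (RtoC 0) (RtoC (Mc sg 0 0)) = Cmult (RtoC (sg ^ m)) (RtoC 0)). ring.
  - set (n1 := S n).
    apply (is_series_decr_n (K := C_AbsRing) (V := C_NormedModule)) with n1. unfold n1; lia.
    rewrite sum_n_zero_C.
    2:{ intros j Hj. rewrite Mc_zero. change (Cmult (lam al j) (RtoC 0) = RtoC 0). ring. unfold n1 in *. lia. }
    assert (Hcb : cos (- B * ln sg) = 1 /\ sin (- B * ln sg) = 0).
    { replace (- B * ln sg) with (- (B * ln sg)) by ring. rewrite cos_neg, sin_neg, Hc, Hsn. split; ring. }
    destruct Hcb as [Hc' Hsn'].
    pose proof (BIN_C (INR n1 - INR m) (- B) sg Hs Hc' Hsn') as HB.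
    pose proof (is_series_scal (V := C_NormedModule) (Cmult (RtoC (sg ^ n1)) (lam al n1)) _ _ HB) as HB2.
    assert (Hexp : exp ((INR n1 - INR m) * ln sg) = sg ^ n1 / sg ^ m).
    { unfold Rminus. rewrite Rmult_plus_distr_r, exp_plus. rewrite exp_ln_pow by lra.
      replace (- INR m * ln sg) with (- (INR m * ln sg)) by ring. rewrite exp_Ropp, exp_ln_pow by lra. reflexivity. }
    rewrite Hexp in HB2.
    assert (Hsm : 0 < sg ^ m) by (apply pow_lt; lra). assert (Hsn1 : 0 < sg ^ n1) by (apply pow_lt; lra).
    match type of HB2 with is_series _ ?l => assert (El : l = plus (Cmult (RtoC (sg ^ m)) (lam al n1)) (opp (RtoC 0))) end.
    { change (Cmult (Cmult (RtoC (sg ^ n1)) (lam al n1)) (RtoC (/ (sg ^ n1 / sg ^ m))) =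
              Cplus (Cmult (RtoC (sg ^ m)) (lam al n1)) (Copp (RtoC 0))).
      replace (/ (sg ^ n1 / sg ^ m)) with (sg ^ m / sg ^ n1) by (field; lra).
      rewrite (RtoC_div (sg ^ m) (sg ^ n1)) by lra. field. intros E. apply RtoC_inj in E. lra. }
    rewrite El in HB2. revert HB2. apply is_series_ext. intros r.
    change (Cmult (Cmult (RtoC (sg ^ n1)) (lam al n1)) (Cmult (gp (INR n1 - INR m) (- B) r) (RtoC ((1 - sg) ^ r)))
            = Cmult (lam al (n1 + r)) (RtoC (Mc sg (n1 + r) n1))).
    unfold Mc. destruct (Nat.leb_spec n1 (n1 + r)). 2: lia.
    replace (n1 + r - n1)%nat with r by lia.
    rewrite !RtoC_mult.
    transitivity (Cmult (Cmult (RtoC (sg ^ n1)) (RtoC ((1 - sg) ^ r))) (Cmult (lam al (n1 + r)) (RtoC (ee n1 r)))).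
    + rewrite lam_ee by (unfold n1; lia). unfold al. simpl fst; simpl snd. ring.
    + ring.
Qed.

Lemma bern (Q : nat) x : 0 <= x <= 1 -> 1 - INR Q * x <= (1 - x) ^ Q.
Proof.
  intros Hx. induction Q. simpl. lra.
  rewrite S_INR. simpl. pose proof (pos_INR Q).
  assert (0 <= (1 - x) ^ Q) by (apply pow_le; lra). nra.
Qed.

Lemma bern2 (N : nat) x : 0 <= x <= 1 -> (1 - x) ^ N * (1 + INR N * x) <= 1.
Proof.
  intros Hx. induction N. simpl. lra.
  rewrite S_INR. simpl. pose proof (pos_INR N).
  assert (0 <= (1 - x) ^ N) by (apply pow_le; lra).
  assert ((1 - x) * (1 + (INR N + 1) * x) <= 1 + INR N * x) by nra. nra.
Qed.

Lemma A2weight_S beta n : A2weight beta (S n) = A2weight beta n * (INR (S n) / (INR (S n) + 1 + beta)).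
Proof. reflexivity. Qed.

Lemma weight_lb beta N : -1 < beta -> 2 * (1 + beta) <= INR N ->
  forall n, / (INR n + 1) ^ N <= A2weight beta n /\ 0 < A2weight beta n.
Proof.
  intros Hb HN n. induction n.
  - simpl. rewrite Rplus_0_l, pow1, Rinv_1. lra.
  - destruct IHn as [IH1 IH2]. rewrite A2weight_S, !S_INR.
    set (k := INR n + 1). assert (Hk : 1 <= k) by (unfold k; pose proof (pos_INR n); lra).
    assert (HP : (k / (k + 1)) ^ N <= k / (k + 1 + beta)).
    { pose proof (bern2 N (1 / (k + 1))) as H. replace (1 - 1 / (k + 1)) with (k / (k + 1)) in H by (field; lra).
      assert (Hx : 0 < 1 / (k + 1) < 1).
      { unfold Rdiv; rewrite Rmult_1_l. split. apply Rinv_0_lt_compat; lra.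
        rewrite <- Rinv_1. apply Rinv_lt_contravar; lra. }
      assert (H1 : (k / (k + 1)) ^ N * (1 + INR N * (1 / (k + 1))) <= 1) by (apply H; lra).
      assert (H2 : 0 < 1 + INR N * (1 / (k + 1))).
      { pose proof (pos_INR N). assert (0 <= INR N * (1 / (k+1))). apply Rmult_le_pos; auto. unfold Rdiv; rewrite Rmult_1_l; left; apply Rinv_0_lt_compat; lra. lra. }
      apply Rle_trans with (/ (1 + INR N * (1 / (k + 1)))).
      { apply Rmult_le_reg_r with (1 + INR N * (1 / (k + 1))); auto. rewrite Rinv_l; lra. }
      replace (/ (1 + INR N * (1 / (k + 1)))) with ((k + 1) / (k + 1 + INR N)) by (field; split; lra).
      apply Rmult_le_reg_r with ((k + 1 + INR N) * (k + 1 + beta)). apply Rmult_lt_0_compat; lra.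
      replace ((k + 1) / (k + 1 + INR N) * ((k + 1 + INR N) * (k + 1 + beta))) with ((k + 1) * (k + 1 + beta)) by (field; lra).
      replace (k / (k + 1 + beta) * ((k + 1 + INR N) * (k + 1 + beta))) with (k * (k + 1 + INR N)) by (field; lra).
      nra. }
    split.
    + assert (Hpk : 0 < k ^ N) by (apply pow_lt; lra).
      assert (Hpk1 : 0 < (k + 1) ^ N) by (apply pow_lt; lra).
      rewrite pow_div in HP by lra.
      apply Rle_trans with (/ k ^ N * (k / (k + 1 + beta))).
      * apply Rmult_le_reg_l with (k ^ N); auto. rewrite <- Rmult_assoc, Rinv_r, Rmult_1_l by lra.
        replace (k ^ N * / (k + 1) ^ N) with (k ^ N / (k + 1) ^ N) by reflexivity. exact HP.
      * apply Rmult_le_compat_r. apply Rlt_le, Rdiv_lt_0_compat; lra. unfold k. exact IH1.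
    + apply Rmult_lt_0_compat; auto. apply Rdiv_lt_0_compat; lra.
Qed.

Lemma Cmod_sub_al (k m B Q : R) : INR 0 <= Q -> Q + Rabs B + 1 <= m -> m <= k ->
  Cmod (Cminus (RtoC k) (m, B)) <= k - Q.
Proof.
  intros HQ HmQ Hk. simpl in HQ.
  unfold Cmod, Cminus, Cplus, Copp, RtoC. simpl.
  rewrite <- (sqrt_Rsqr (k - Q)) by (pose proof (Rabs_pos B); lra).
  apply sqrt_le_1_alt. unfold Rsqr.
  assert (B * B <= (m - Q) * (m - Q)).
  { pose proof (Rabs_pos B).
    assert (HB2 : Rabs B * Rabs B = B * B) by (rewrite <- Rabs_mult; apply Rabs_pos_eq; nra).
    nra. }
  pose proof (Rabs_pos B). nra.
Qed.

Lemma lam_bound (m : nat) (B : R) (Q : nat) : INR Q + Rabs B + 1 <= INR m ->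
  exists K', 0 <= K' /\ forall j, Cmod (lam (INR m, B) j) * (INR j + 1) ^ Q <= K'.
Proof.
  intros Hm. set (al := (INR m, B) : C).
  assert (Hm1 : (1 <= m)%nat).
  { destruct m. simpl in Hm. pose proof (pos_INR Q); pose proof (Rabs_pos B); lra. lia. }
  set (D := fun j => Cmod (lam al j) * INR j ^ Q).
  assert (Hstep : forall j, (m <= j)%nat -> D (S j) <= D j).
  { intros j Hj. unfold D. rewrite lam_S by lia. set (k := INR j).
    assert (Hk : INR m <= k) by (apply le_INR; auto).
    assert (Hk1 : 1 <= k) by (apply le_INR in Hm1; simpl in Hm1; lra).
    rewrite Cmod_mult, Cmod_div.
    2:{ intros E. apply RtoC_inj in E. lra. }
    rewrite Cmod_R, Rabs_pos_eq by lra. rewrite S_INR. fold k.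
    pose proof (Cmod_sub_al k (INR m) B (INR Q) (pos_INR Q) Hm Hk) as HC.
    assert (HQk : INR Q <= k) by (pose proof (Rabs_pos B); lra).
    assert (Hb : (k - INR Q) * (k + 1) ^ Q <= k * k ^ Q).
    { pose proof (bern Q (1 / (k + 1))) as Hb.
      replace (1 - 1 / (k + 1)) with (k / (k + 1)) in Hb by (field; lra).
      assert (Hx : 0 <= 1 / (k + 1) <= 1).
      { unfold Rdiv; rewrite Rmult_1_l. split. left; apply Rinv_0_lt_compat; lra.
        rewrite <- Rinv_1. apply Rinv_le_contravar; lra. }
      specialize (Hb Hx). rewrite pow_div in Hb by lra.
      assert (Hpk1 : 0 < (k + 1) ^ Q) by (apply pow_lt; lra).
      assert (Hc : (k - INR Q) / k <= k ^ Q / (k + 1) ^ Q).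
      { eapply Rle_trans; [|exact Hb]. pose proof (pos_INR Q).
        apply Rmult_le_reg_r with (k * (k + 1)). nra.
        replace ((k - INR Q) / k * (k * (k + 1))) with ((k - INR Q) * (k + 1)) by (field; lra).
        replace ((1 - INR Q * (1 / (k + 1))) * (k * (k + 1))) with (k * (k + 1) - INR Q * k) by (field; lra).
        nra. }
      apply Rmult_le_reg_r with (/ (k * (k + 1) ^ Q)). apply Rinv_0_lt_compat; nra.
      replace ((k - INR Q) * (k + 1) ^ Q * / (k * (k + 1) ^ Q)) with ((k - INR Q) / k) by (field; lra).
      replace (k * k ^ Q * / (k * (k + 1) ^ Q)) with (k ^ Q / (k + 1) ^ Q) by (field; lra).
      exact Hc. }
    pose proof (Cmod_ge_0 (lam al j)) as H0.
    assert (Hkk : 0 < k) by lra.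
    apply Rle_trans with (Cmod (lam al j) * ((k - INR Q) / k) * (k + 1) ^ Q).
    - apply Rmult_le_compat_r. apply pow_le; lra. apply Rmult_le_compat_l; auto.
      unfold Rdiv. apply Rmult_le_compat_r. left; apply Rinv_0_lt_compat; lra. exact HC.
    - replace (Cmod (lam al j) * ((k - INR Q) / k) * (k + 1) ^ Q) with (Cmod (lam al j) * ((k - INR Q) * (k + 1) ^ Q) / k) by (field; lra).
      apply Rmult_le_reg_r with k; auto. unfold Rdiv. rewrite Rmult_assoc, Rinv_l, Rmult_1_r by lra.
      replace (Cmod (lam al j) * k ^ Q * k) with (Cmod (lam al j) * (k * k ^ Q)) by ring.
      apply Rmult_le_compat_l; auto. }
  assert (Hmono : forall j, (m <= j)%nat -> D j <= D m).
  { intros j Hj. induction Hj. lra. pose proof (Hstep m0 Hj). lra. }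
  set (S0 := sum_f_R0 (fun i => Cmod (lam al i) * (INR i + 1) ^ Q) m).
  exists (2 ^ Q * D m + S0). split.
  { apply Rplus_le_le_0_compat. apply Rmult_le_pos. apply pow_le; lra. unfold D. apply Rmult_le_pos. apply Cmod_ge_0. apply pow_le, pos_INR.
    apply cond_pos_sum. intros i. apply Rmult_le_pos. apply Cmod_ge_0. apply pow_le. pose proof (pos_INR i); lra. }
  intros j. destruct (Nat.le_gt_cases j m) as [Hj|Hj].
  - assert (Cmod (lam al j) * (INR j + 1) ^ Q <= S0).
    { apply sum_term_le with (f := fun i => Cmod (lam al i) * (INR i + 1) ^ Q); auto.
      intros i. apply Rmult_le_pos. apply Cmod_ge_0. apply pow_le. pose proof (pos_INR i); lra. }
    assert (0 <= 2 ^ Q * D m).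
    { apply Rmult_le_pos. apply pow_le; lra. unfold D. apply Rmult_le_pos. apply Cmod_ge_0. apply pow_le, pos_INR. }
    lra.
  - assert (HDj := Hmono j ltac:(lia)).
    assert (Hj1 : 1 <= INR j) by (replace 1 with (INR 1) by reflexivity; apply le_INR; lia).
    assert (Cmod (lam al j) * (INR j + 1) ^ Q <= 2 ^ Q * D j).
    { unfold D. rewrite <- Rmult_assoc, (Rmult_comm (2 ^ Q)), Rmult_assoc, <- Rpow_mult_distr.
      apply Rmult_le_compat_l. apply Cmod_ge_0. apply pow_incr. pose proof (pos_INR j); lra. }
    assert (0 <= S0).
    { apply cond_pos_sum. intros i. apply Rmult_le_pos. apply Cmod_ge_0. apply pow_le. pose proof (pos_INR i); lra. }
    assert (0 <= 2 ^ Q) by (apply pow_le; lra).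
    nra.
Qed.

Lemma real_ps_unique (d : nat -> R) :
  (forall x, Rabs x < 1 -> is_series (fun n => d n * x ^ n) 0) -> forall n, d n = 0.
Proof.
  intros H n.
  assert (Hrad : forall x, Rabs x < 1 -> Rbar_lt (Rabs x) (CV_radius d)).
  { apply radius_ge1. intros r0 Hr0. apply ex_series_bounded. exists 0. apply H.
    rewrite Rabs_pos_eq; lra. }
  assert (HP : forall x, Rabs x < 1 -> PSeries d x = 0).
  { intros x Hx. rewrite PSeries_eq. apply is_series_unique. generalize (H x Hx). apply is_series_ext.
    intros k. symmetry. rewrite pow_n_pow. unfold scal; simpl; unfold mult; simpl. ring. }
  assert (H0 : Rbar_lt 0 (CV_radius d)).
  { pose proof (Hrad 0 ltac:(rewrite Rabs_R0; lra)). rewrite Rabs_R0 in H0. exact H0. }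
  pose proof (Derive_n_coef d n H0) as Hc.
  assert (Hz : Derive_n (PSeries d) n 0 = 0).
  { rewrite (Derive_n_ext_loc _ (fun _ => 0)).
    - destruct n. reflexivity. apply Derive_n_const.
    - exists (mkposreal 1 Rlt_0_1). intros y Hy. apply HP.
      unfold ball in Hy; simpl in Hy; unfold AbsRing_ball, abs, minus, plus, opp in Hy; simpl in Hy.
      change (Rabs (y + - 0) < 1) in Hy. rewrite Ropp_0, Rplus_0_r in Hy. exact Hy. }
  rewrite Hz in Hc. pose proof (INR_fact_neq_0 n).
  symmetry in Hc. apply Rmult_integral in Hc. destruct Hc; auto. contradiction.
Qed.

Lemma coeff_unique f a b : has_coeffs f a -> has_coeffs f b -> forall n, a n = b n.
Proof.
  intros Ha Hb.
  assert (Hre : forall n, Re (a n) - Re (b n) = 0).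
  { apply real_ps_unique. intros x Hx.
    assert (Hz : Cmod (RtoC x) < 1) by (rewrite Cmod_R; auto).
    pose proof (proj1 (proj1 (is_series_C_split _ _) (Ha _ Hz))) as H1.
    pose proof (proj1 (proj1 (is_series_C_split _ _) (Hb _ Hz))) as H2.
    pose proof (is_series_minus (V := R_NormedModule) _ _ _ _ H1 H2) as H3.
    replace 0 with (plus (Re (f (RtoC x))) (opp (Re (f (RtoC x))))) by (unfold plus, opp; simpl; ring).
    revert H3. apply is_series_ext. intros n. rewrite pow_n_RtoC.
    unfold plus, opp; simpl. destruct (a n), (b n). simpl. ring. }
  assert (Him : forall n, Im (a n) - Im (b n) = 0).
  { apply real_ps_unique. intros x Hx.
    assert (Hz : Cmod (RtoC x) < 1) by (rewrite Cmod_R; auto).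
    pose proof (proj2 (proj1 (is_series_C_split _ _) (Ha _ Hz))) as H1.
    pose proof (proj2 (proj1 (is_series_C_split _ _) (Hb _ Hz))) as H2.
    pose proof (is_series_minus (V := R_NormedModule) _ _ _ _ H1 H2) as H3.
    replace 0 with (plus (Im (f (RtoC x))) (opp (Im (f (RtoC x))))) by (unfold plus, opp; simpl; ring).
    revert H3. apply is_series_ext. intros n. rewrite pow_n_RtoC.
    unfold plus, opp; simpl. destruct (a n), (b n). simpl. ring. }
  intros n. specialize (Hre n). specialize (Him n). destruct (a n), (b n). simpl in *. f_equal; lra.
Qed.

Lemma inA2_poly beta N a : (forall n, / (INR n + 1) ^ N <= A2weight beta n /\ 0 < A2weight beta n) ->
  ex_series (fun n => A2weight beta n * Cmod (a n) ^ 2) -> exists K, Poly K N a.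
Proof.
  intros Hw Hs. destruct (ex_series_bounded _ Hs) as [M HM].
  exists (M + 1). intros n. specialize (HM n). destruct (Hw n) as [Hw1 Hw2].
  set (P := (INR n + 1) ^ N) in *. set (y := Cmod (a n)).
  assert (HP : 1 <= P). { unfold P. apply pow_R1_Rle. pose proof (pos_INR n); lra. }
  assert (Hy : 0 <= y) by apply Cmod_ge_0.
  rewrite Rabs_pos_eq in HM by (apply Rmult_le_pos; [lra| apply pow_le; auto]).
  assert (HM0 : 0 <= M) by (pose proof (pow_le y 2 Hy); nra).
  assert (Hy2 : y ^ 2 <= M * P).
  { assert (/ P * y ^ 2 <= M). { eapply Rle_trans; [|exact HM]. apply Rmult_le_compat_r. apply pow_le; auto. auto. }
    apply Rmult_le_reg_l with (/ P). apply Rinv_0_lt_compat; lra.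
    replace (/ P * (M * P)) with M by (field; lra). auto. }
  destruct (Rle_or_lt y ((M + 1) * P)); auto. nra.
Qed.

Lemma telescope_series : is_series (fun j => / (INR j + 1) - / (INR j + 2)) 1.
Proof.
  apply is_series_lim. apply is_lim_seq_ext with (fun N => 1 - / (INR N + 2)).
  - intros N. rewrite sum_n_Reals. induction N.
    + simpl. field.
    + rewrite tech5, <- IHN. rewrite S_INR. field. pose proof (pos_INR N). lra.
  - replace (Finite 1) with (Finite (1 - 0)) by (f_equal; ring).
    apply is_lim_seq_minus'. apply is_lim_seq_const.
    replace (Finite 0) with (Rbar_inv p_infty) by reflexivity.
    apply is_lim_seq_inv. eapply is_lim_seq_plus. apply is_lim_seq_INR. apply is_lim_seq_const.
    reflexivity. discriminate.
Qed.

Lemma inv_sq_ex : ex_series (fun j => / (INR j + 1) ^ 2).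
Proof.
  apply (ex_series_le (V := R_CompleteNormedModule)) with (fun j => 2 * (/ (INR j + 1) - / (INR j + 2))).
  - intros j. unfold norm; simpl; unfold abs; simpl. pose proof (pos_INR j).
    rewrite Rabs_pos_eq by (left; apply Rinv_0_lt_compat; nra).
    replace (INR j + 2) with ((INR j + 1) + 1) by ring. set (y := INR j + 1).
    assert (Hy : 1 <= y) by (unfold y; lra).
    assert (E : 2 * (/ y - / (y + 1)) - / y ^ 2 = (y - 1) / (y * y * (y + 1))) by (field; lra).
    assert (0 <= (y - 1) / (y * y * (y + 1))). { apply Rdiv_le_0_compat. lra. apply Rmult_lt_0_compat; nra. }
    replace (y * (y * 1)) with (y ^ 2) by ring. lra.
  - exists (2 * 1). pose proof telescope_series as T. apply is_series_scal_l with (c := 2) in T. exact T.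
Qed.

Definition VB (N : nat) (v : nat -> C) :=
  exists K', 0 <= K' /\ forall j, Cmod (v j) * (INR j + 1) ^ (N + 2) <= K'.
Definition VE (sg : R) (m N : nat) (v : nat -> C) :=
  forall K a l, Poly K N a -> is_series (V := C_NormedModule) (fun j => Cmult (v j) (a j)) l ->
    is_series (V := C_NormedModule) (fun j => Cmult (v j) (CT sg a j)) (Cmult (RtoC (sg ^ m)) l).

Lemma VB_bound N v K' j : 0 <= K' -> Cmod (v j) * (INR j + 1) ^ (N + 2) <= K' ->
  Cmod (v j) * (INR j + 1) ^ N <= K' * / (INR j + 1) ^ 2.
Proof.
  intros HK H. pose proof (pos_INR j).
  assert (Hp : 0 < (INR j + 1) ^ 2) by (apply pow_lt; lra).
  rewrite pow_add in H. apply Rmult_le_reg_r with ((INR j + 1) ^ 2); auto.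
  replace (K' * / (INR j + 1) ^ 2 * (INR j + 1) ^ 2) with K' by (field; lra).
  rewrite Rmult_assoc. exact H.
Qed.

Lemma pair_bound N v K' K a : 0 <= K' -> (forall j, Cmod (v j) * (INR j + 1) ^ (N + 2) <= K') -> Poly K N a ->
  forall j, Cmod (v j) * Cmod (a j) <= K * K' * / (INR j + 1) ^ 2.
Proof.
  intros HK' Hv Ha j. pose proof (Poly_K_nonneg _ _ _ Ha) as HK.
  pose proof (VB_bound N v K' j HK' (Hv j)) as H1.
  apply Rle_trans with (Cmod (v j) * (K * (INR j + 1) ^ N)).
  apply Rmult_le_compat_l. apply Cmod_ge_0. apply Ha.
  replace (Cmod (v j) * (K * (INR j + 1) ^ N)) with (K * (Cmod (v j) * (INR j + 1) ^ N)) by ring.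
  rewrite Rmult_assoc. apply Rmult_le_compat_l; auto.
Qed.

Lemma pair_ex N v K a : VB N v -> Poly K N a ->
  ex_series (fun j => Cmod (v j) * Cmod (a j)) /\ ex_series (V := C_NormedModule) (fun j => Cmult (v j) (a j)).
Proof.
  intros [K' [HK' Hv]] Ha.
  assert (E : ex_series (fun j => K * K' * / (INR j + 1) ^ 2)).
  { destruct inv_sq_ex as [s Hs]. exists (K * K' * s). apply (is_series_scal_l (K * K')) in Hs. exact Hs. }
  split.
  - apply (ex_series_le (V := R_CompleteNormedModule)) with (2 := E). intros j.
    unfold norm; simpl; unfold abs; simpl. rewrite Rabs_pos_eq by (apply Rmult_le_pos; apply Cmod_ge_0).
    apply pair_bound with N; auto.
  - apply ex_series_C_abs with (2 := E). intros j. rewrite Cmod_mult. apply pair_bound with N; auto.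
Qed.

Lemma sum_n_mult_l (f : nat -> C) (c : C) N : sum_n (fun n => Cmult c (f n)) N = Cmult c (sum_n f N).
Proof.
  rewrite <- (Cmult_comm (sum_n f N)), <- sum_n_mult_r. apply sum_n_ext. intros; apply Cmult_comm.
Qed.

Lemma lam_VE (sg B : R) (m N : nat) : 0 < sg < 1 -> cos (B * ln sg) = 1 -> sin (B * ln sg) = 0 ->
  VB N (lam (INR m, B)) -> VE sg m N (lam (INR m, B)).
Proof.
  intros Hs Hc Hsn HVB K a l Ha Hl. set (al := (INR m, B) : C) in *.
  destruct HVB as [K' [HK' Hv]]. pose proof (Poly_K_nonneg _ _ _ Ha) as HK.
  pose proof (CT_poly sg K N a Hs Ha) as Ha2.
  destruct (pair_ex N (lam al) K (CT sg a) (ex_intro _ K' (conj HK' Hv)) Ha2) as [_ [l2 Hl2]].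
  pose (L2 := (l2 : C)).
  assert (HL2 : is_series (V := C_NormedModule) (fun j => Cmult (lam al j) (CT sg a j)) L2) by exact Hl2.
  clearbody L2. clear Hl2.
  set (u := fun j n => Cmult (lam al j) (Cmult (RtoC (Mc sg j n)) (a n))).
  assert (HT : is_series (V := C_NormedModule) (fun n => Cmult (RtoC (sg ^ m)) (Cmult (lam al n) (a n))) L2).
  { apply fubini_C with u.
    - intros j n Hjn. unfold u. rewrite Mc_zero by auto. rewrite Cmult_0_l, Cmult_0_r. reflexivity.
    - assert (E : ex_series (fun j => K * K' * / (INR j + 1) ^ 2)).
      { destruct inv_sq_ex as [s Hs']. exists (K * K' * s). apply (is_series_scal_l (K * K')) in Hs'. exact Hs'. }
      apply (ex_series_le (V := R_CompleteNormedModule)) with (2 := E). intros j.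
      unfold norm; simpl; unfold abs; simpl. rewrite Rabs_pos_eq by (apply cond_pos_sum; intros; apply Cmod_ge_0).
      apply Rle_trans with (Cmod (lam al j) * (K * (INR j + 1) ^ N)).
      + apply Rle_trans with (sum_f_R0 (fun n => Cmod (lam al j) * (Mc sg j n * (K * (INR j + 1) ^ N))) j).
        * apply sum_Rle. intros n Hn. unfold u. rewrite !Cmod_mult, Cmod_R, Rabs_pos_eq by (apply Mc_nonneg; auto).
          apply Rmult_le_compat_l. apply Cmod_ge_0. apply Rmult_le_compat_l. apply Mc_nonneg; auto.
          eapply Rle_trans. apply Ha. apply Rmult_le_compat_l; auto. apply pow_incr. split. pose proof (pos_INR n); lra.
          apply le_INR in Hn. lra.
        * rewrite sum_scal_l. apply Rmult_le_compat_l. apply Cmod_ge_0.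
          rewrite <- scal_sum. rewrite Rmult_comm.
          pose proof (Mc_rowsum_le sg j Hs). pose proof (cond_pos_sum (Mc sg j) j (fun k => Mc_nonneg sg j k Hs)).
          assert (0 <= K * (INR j + 1) ^ N). { apply Rmult_le_pos; auto. apply pow_le. pose proof (pos_INR j); lra. }
          nra.
      + replace (Cmod (lam al j) * (K * (INR j + 1) ^ N)) with (K * (Cmod (lam al j) * (INR j + 1) ^ N)) by ring.
        rewrite Rmult_assoc. apply Rmult_le_compat_l; auto. apply VB_bound; auto.
    - intros n. pose proof (is_series_scal (V := C_NormedModule) (a n) _ _ (col_eigen sg B m n Hs Hc Hsn)) as H.
      fold al in H.
      assert (H' : is_series (V := C_NormedModule) (fun j => u j n) (scal (a n) (Cmult (RtoC (sg ^ m)) (lam al n)))).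
      { revert H. apply is_series_ext. intros j. unfold u.
        change (Cmult (a n) (Cmult (lam al j) (RtoC (Mc sg j n))) = Cmult (lam al j) (Cmult (RtoC (Mc sg j n)) (a n))).
        ring. }
      assert (Eq : @eq C (scal (a n) (Cmult (RtoC (sg ^ m)) (lam al n))) (Cmult (RtoC (sg ^ m)) (Cmult (lam al n) (a n)))).
      { change (@eq C (Cmult (a n) (Cmult (RtoC (sg ^ m)) (lam al n))) (Cmult (RtoC (sg ^ m)) (Cmult (lam al n) (a n)))). ring. }
      rewrite Eq in H'. exact H'.
    - revert HL2. apply is_series_ext. intros j. unfold u, CT. rewrite sum_n_mult_l. reflexivity. }
  pose proof (is_series_scal (V := C_NormedModule) (RtoC (sg ^ m)) _ _ Hl) as H2.
  pose proof (is_series_C_unique _ _ _ HT H2) as E. rewrite E in HL2. exact HL2.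
Qed.

Lemma is_series_Cscal (a : nat -> C) (l c : C) :
  is_series (V := C_NormedModule) a l -> is_series (V := C_NormedModule) (fun j => Cmult c (a j)) (Cmult c l).
Proof. intros H. exact (is_series_scal (V := C_NormedModule) c _ _ H). Qed.
Lemma is_series_Cplus (a b : nat -> C) (la lb : C) :
  is_series (V := C_NormedModule) a la -> is_series (V := C_NormedModule) b lb ->
  is_series (V := C_NormedModule) (fun j => Cplus (a j) (b j)) (Cplus la lb).
Proof. intros H1 H2. exact (is_series_plus _ _ _ _ H1 H2). Qed.
Lemma is_series_C_eq (a b : nat -> C) (l l' : C) :
  is_series (V := C_NormedModule) a l -> (forall j, a j = b j) -> l = l' -> is_series (V := C_NormedModule) b l'.
Proof. intros H E <-. revert H. apply is_series_ext. auto. Qed.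

Lemma VB_lin N c1 c2 v1 v2 : VB N v1 -> VB N v2 -> VB N (fun j => Cplus (Cmult c1 (v1 j)) (Cmult c2 (v2 j))).
Proof.
  intros [K1 [H1 Hv1]] [K2 [H2 Hv2]]. exists (Cmod c1 * K1 + Cmod c2 * K2). split.
  { pose proof (Cmod_ge_0 c1); pose proof (Cmod_ge_0 c2). nra. }
  intros j. assert (Hp : 0 <= (INR j + 1) ^ (N + 2)) by (apply pow_le; pose proof (pos_INR j); lra).
  apply Rle_trans with ((Cmod c1 * Cmod (v1 j) + Cmod c2 * Cmod (v2 j)) * (INR j + 1) ^ (N + 2)).
  - apply Rmult_le_compat_r; auto. eapply Rle_trans. apply Cmod_triangle. rewrite !Cmod_mult. lra.
  - specialize (Hv1 j). specialize (Hv2 j). pose proof (Cmod_ge_0 c1); pose proof (Cmod_ge_0 c2). nra.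
Qed.

Lemma VE_lin sg m N c1 c2 v1 v2 : VB N v1 -> VB N v2 -> VE sg m N v1 -> VE sg m N v2 ->
  VE sg m N (fun j => Cplus (Cmult c1 (v1 j)) (Cmult c2 (v2 j))).
Proof.
  intros B1 B2 E1 E2 K a l Ha Hl.
  destruct (pair_ex N v1 K a B1 Ha) as [_ [l1 Hl1]].
  destruct (pair_ex N v2 K a B2 Ha) as [_ [l2 Hl2]].
  assert (Hsum : is_series (V := C_NormedModule) (fun j => Cmult (Cplus (Cmult c1 (v1 j)) (Cmult c2 (v2 j))) (a j))
                   (Cplus (Cmult c1 l1) (Cmult c2 l2))).
  { pose proof (is_series_plus _ _ _ _ (is_series_scal (V := C_NormedModule) c1 _ _ Hl1)
                  (is_series_scal (V := C_NormedModule) c2 _ _ Hl2)) as H.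
    revert H. apply is_series_ext. intros j.
    change (Cplus (Cmult c1 (Cmult (v1 j) (a j))) (Cmult c2 (Cmult (v2 j) (a j))) =
            Cmult (Cplus (Cmult c1 (v1 j)) (Cmult c2 (v2 j))) (a j)). ring. }
  pose proof (is_series_C_unique _ _ _ Hl Hsum) as El. rewrite El.
  pose proof (E1 K a l1 Ha Hl1) as F1. pose proof (E2 K a l2 Ha Hl2) as F2.
  pose proof (is_series_Cplus _ _ _ _ (is_series_Cscal _ _ c1 F1) (is_series_Cscal _ _ c2 F2)) as H.
  apply (is_series_C_eq _ _ _ _ H).
  - intros j. ring.
  - ring.
Qed.

Lemma iter_coeffs sg f a K N : 0 < sg < 1 -> psi_self_map (RtoC sg) -> has_coeffs f a -> Poly K N a ->
  forall k, has_coeffs (Nat.iter k (comp_op (psi (RtoC sg))) f) (Nat.iter k (CT sg) a) /\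
            Poly K N (Nat.iter k (CT sg) a).
Proof.
  intros Hs Hps Hf Ha k. induction k.
  - simpl. auto.
  - destruct IHk as [H1 H2]. simpl. split.
    + apply comp_coeffs with K N; auto.
    + apply CT_poly; auto.
Qed.

Lemma sum_coeffs (F : nat -> C -> C) (A : nat -> nat -> C) (c : nat -> C) M :
  (forall k, has_coeffs (F k) (A k)) ->
  has_coeffs (fun z => sum_n (fun k => Cmult (c k) (F k z)) M) (fun j => sum_n (fun k => Cmult (c k) (A k j)) M).
Proof.
  intros HF z Hz. induction M.
  - pose proof (is_series_scal (V := C_NormedModule) (c 0%nat) _ _ (HF 0%nat z Hz)) as H.
    rewrite sum_O. revert H. apply is_series_ext. intros j. rewrite sum_O.
    change (Cmult (c 0%nat) (Cmult (A 0%nat j) (pow_n z j)) = Cmult (Cmult (c 0%nat) (A 0%nat j)) (pow_n z j)). ring.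
  - pose proof (is_series_plus _ _ _ _ IHM (is_series_scal (V := C_NormedModule) (c (S M)) _ _ (HF (S M) z Hz))) as H.
    rewrite sum_Sn. revert H. apply is_series_ext. intros j. rewrite sum_Sn.
    change (Cplus (Cmult (sum_n (fun k => Cmult (c k) (A k j)) M) (pow_n z j)) (Cmult (c (S M)) (Cmult (A (S M) j) (pow_n z j))) =
            Cmult (Cplus (sum_n (fun k => Cmult (c k) (A k j)) M) (Cmult (c (S M)) (A (S M) j))) (pow_n z j)). ring.
Qed.

Lemma amgm (x y w e : R) : 0 <= x -> 0 <= y -> 0 < w -> 0 < e ->
  x * y <= (e * w * x ^ 2 + y ^ 2 / w / e) / 2.
Proof.
  intros Hx Hy Hw He.
  assert (E : (e * w * x ^ 2 + y ^ 2 / w / e) / 2 - x * y = (e * w * x - y) ^ 2 / (2 * e * w)) by (field; lra).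
  assert (0 <= (e * w * x - y) ^ 2 / (2 * e * w)).
  { apply Rdiv_le_0_compat. apply pow2_ge_0. nra. }
  lra.
Qed.

Lemma unit_coeffs j0 : has_coeffs (fun z => pow_n z j0) (fun j => if Nat.eqb j j0 then RtoC 1 else RtoC 0).
Proof.
  intros z Hz.
  assert (E : sum_n (fun n => Cmult (if Nat.eqb n j0 then RtoC 1 else RtoC 0) (pow_n z n)) j0 = pow_n z j0).
  { destruct j0.
    - rewrite sum_O. simpl. change (Cmult (RtoC 1) (RtoC 1) = RtoC 1). ring.
    - rewrite sum_Sn. rewrite sum_n_zero_C.
      + rewrite Nat.eqb_refl. change (Cplus (RtoC 0) (Cmult (RtoC 1) (pow_n z (S j0))) = pow_n z (S j0)). ring.
      + intros j Hj. destruct (Nat.eqb_spec j (S j0)). lia. change (Cmult (RtoC 0) (pow_n z j) = RtoC 0). ring. }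
  rewrite <- E. apply (is_series_finite (K := C_AbsRing) (V := C_NormedModule)).
  intros j Hj. destruct (Nat.eqb_spec j j0). lia. change (Cmult (RtoC 0) (pow_n z j) = RtoC 0). ring.
Qed.

Lemma series_nonneg (b : nat -> R) l : is_series b l -> (forall n, 0 <= b n) -> 0 <= l.
Proof.
  intros H Hb. pose proof (series_abs_le (fun _ => 0) b 0 l (is_series_zero (V := R_NormedModule)) H) as H2.
  rewrite Rabs_R0 in H2. apply H2. intros n. rewrite Rabs_R0. auto.
Qed.

Lemma no_cyclic beta sg N m f a K v j0 :
  0 < sg < 1 -> psi_self_map (RtoC sg) ->
  (forall n, / (INR n + 1) ^ N <= A2weight beta n /\ 0 < A2weight beta n) ->
  has_coeffs f a -> Poly K N a -> VB N v -> VE sg m N v ->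
  is_series (V := C_NormedModule) (fun j => Cmult (v j) (a j)) (RtoC 0) -> v j0 <> RtoC 0 ->
  ~ (forall g, inA2 beta g -> forall eps, 0 < eps -> exists (M : nat) (c : nat -> C),
        A2dist_lt beta g (fun z => sum_n (fun k => Cmult (c k) (Nat.iter k (comp_op (psi (RtoC sg))) f z)) M) eps).
Proof.
  intros Hs Hps Hw Hf Ha HVB HVE Hv0 Hj0 Hcyc.
  set (e := fun j => if Nat.eqb j j0 then RtoC 1 else RtoC 0).
  assert (He : has_coeffs (fun z => pow_n z j0) e) by apply unit_coeffs.
  assert (Hg : inA2 beta (fun z => pow_n z j0)).
  { exists e. split; auto. exists (sum_n (fun n => A2weight beta n * Cmod (e n) ^ 2) j0).
    apply (is_series_finite (K := R_AbsRing) (V := R_NormedModule)). intros j Hj. unfold e.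
    destruct (Nat.eqb_spec j j0). lia. rewrite Cmod_0. simpl. unfold zero; simpl. ring. }
  destruct HVB as [K' [HK' Hv]].
  set (w := A2weight beta).
  assert (HVs : ex_series (fun j => Cmod (v j) ^ 2 / w j)).
  { apply (ex_series_le (V := R_CompleteNormedModule)) with (fun j => K' * (K' * / (INR j + 1) ^ 2)).
    - intros j. unfold norm; simpl; unfold abs; simpl. destruct (Hw j) as [Hw1 Hw2]. fold w in Hw1, Hw2.
      assert (Hp : 1 <= (INR j + 1) ^ N) by (apply pow_R1_Rle; pose proof (pos_INR j); lra).
      assert (Hp2 : 1 <= (INR j + 1) ^ (N + 2)) by (apply pow_R1_Rle; pose proof (pos_INR j); lra).
      pose proof (Cmod_ge_0 (v j)) as Hc0.
      rewrite Rabs_pos_eq by (apply Rdiv_le_0_compat; [apply pow2_ge_0 | auto]).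
      assert (Hiw : / w j <= (INR j + 1) ^ N).
      { rewrite <- (Rinv_inv ((INR j + 1) ^ N)). apply Rinv_le_contravar. apply Rinv_0_lt_compat; lra. auto. }
      assert (Hv1 : Cmod (v j) <= K').
      { eapply Rle_trans; [|apply (Hv j)]. rewrite <- Rmult_1_r at 1. apply Rmult_le_compat_l; auto. }
      pose proof (VB_bound N v K' j HK' (Hv j)) as Hv2.
      unfold Rdiv. simpl. rewrite Rmult_1_r.
      apply Rle_trans with (Cmod (v j) * (Cmod (v j) * (INR j + 1) ^ N)).
      + rewrite Rmult_assoc. apply Rmult_le_compat_l; auto. apply Rmult_le_compat_l; auto.
      + apply Rmult_le_compat; auto. apply Rmult_le_pos; auto. apply pow_le; pose proof (pos_INR j); lra.
    - destruct inv_sq_ex as [s0 Hs0]. exists (K' * (K' * s0)).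
      exact (is_series_scal_l (V := R_NormedModule) K' _ _ (is_series_scal_l (V := R_NormedModule) K' _ _ Hs0)). }
  destruct HVs as [V0 HV0]. pose (V := (V0 : R)). assert (HV : is_series (fun j => Cmod (v j) ^ 2 / w j) V) by exact HV0. clearbody V. clear HV0.
  assert (HV0 : 0 <= V).
  { apply (series_nonneg _ _ HV).
    intros j. apply Rdiv_le_0_compat. apply pow2_ge_0. apply Hw. }
  set (nu := Cmod (v j0)).
  assert (Hnu : 0 < nu) by (apply Cmod_gt_0; auto).
  set (ep := 2 * V / nu + 1).
  assert (Hep : 0 < ep) by (unfold ep; apply Rplus_le_lt_0_compat; [apply Rdiv_le_0_compat; lra | lra]).
  set (eps := Rmin 1 (nu / (2 * ep))).
  assert (Heps : 0 < eps) by (unfold eps; apply Rmin_pos; [lra | apply Rdiv_lt_0_compat; lra]).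
  destruct (Hcyc _ Hg eps Heps) as [M [c [a' [b' [L0 [Ha' [Hb' [HL0 HLe0]]]]]]]].
  pose (L := (L0 : R)). assert (HL : is_series (fun n => A2weight beta n * Cmod (Cminus (a' n) (b' n)) ^ 2) L) by exact HL0.
  assert (HLe : L < eps ^ 2) by exact HLe0. clearbody L. clear HL0 HLe0.
  set (A := fun k => Nat.iter k (CT sg) a).
  assert (HA : forall k, has_coeffs (Nat.iter k (comp_op (psi (RtoC sg))) f) (A k) /\ Poly K N (A k))
    by (intros k; apply iter_coeffs; auto).
  set (Bc := fun j => sum_n (fun k => Cmult (c k) (A k j)) M).
  assert (HB : has_coeffs (fun z => sum_n (fun k => Cmult (c k) (Nat.iter k (comp_op (psi (RtoC sg))) f z)) M) Bc).
  { apply sum_coeffs. intros k; apply HA. }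
  pose proof (coeff_unique _ _ _ Ha' He) as Ea'.
  pose proof (coeff_unique _ _ _ Hb' HB) as Eb'.
  assert (HvA : forall k, is_series (V := C_NormedModule) (fun j => Cmult (v j) (A k j)) (RtoC 0)).
  { induction k. exact Hv0.
    pose proof (HVE K (A k) (RtoC 0) (proj2 (HA k)) IHk) as H.
    apply (is_series_C_eq _ _ _ _ H). intros j; reflexivity. ring. }
  assert (HvB : is_series (V := C_NormedModule) (fun j => Cmult (v j) (Bc j)) (RtoC 0)).
  { unfold Bc. clear Hb' HB Eb' HLe HL. induction M.
    - apply (is_series_C_eq _ _ _ _ (is_series_Cscal _ _ (c 0%nat) (HvA 0%nat))).
      intros j. rewrite sum_O. ring. ring.
    - apply (is_series_C_eq _ _ _ _ (is_series_Cplus _ _ _ _ IHM (is_series_Cscal _ _ (c (S M)) (HvA (S M))))).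
      intros j. rewrite sum_Sn. change (Cplus (Cmult (v j) (sum_n (fun k => Cmult (c k) (A k j)) M)) (Cmult (c (S M)) (Cmult (v j) (A (S M) j))) =
        Cmult (v j) (Cplus (sum_n (fun k => Cmult (c k) (A k j)) M) (Cmult (c (S M)) (A (S M) j)))). ring.
      ring. }
  assert (Hve : is_series (V := C_NormedModule) (fun j => Cmult (v j) (e j)) (v j0)).
  { replace (v j0) with (sum_n (fun j => Cmult (v j) (e j)) j0).
    apply (is_series_finite (K := C_AbsRing) (V := C_NormedModule)). intros j Hj. unfold e.
    destruct (Nat.eqb_spec j j0). lia. change (Cmult (v j) (RtoC 0) = RtoC 0). ring.
    destruct j0.
    - rewrite sum_O. unfold e. simpl. change (Cmult (v 0%nat) (RtoC 1) = v 0%nat). ring.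
    - rewrite sum_Sn. rewrite sum_n_zero_C.
      + unfold e. rewrite Nat.eqb_refl. change (Cplus (RtoC 0) (Cmult (v (S j0)) (RtoC 1)) = v (S j0)). ring.
      + intros j Hj. unfold e. destruct (Nat.eqb_spec j (S j0)). lia. change (Cmult (v j) (RtoC 0) = RtoC 0). ring. }
  set (d := fun j => Cminus (a' j) (b' j)).
  assert (Hvd : is_series (V := C_NormedModule) (fun j => Cmult (v j) (d j)) (v j0)).
  { apply (is_series_C_eq _ _ _ _ (is_series_Cplus _ _ _ _ Hve (is_series_Cscal _ _ (RtoC (-1)) HvB))).
    - intros j. unfold d. rewrite Ea', Eb'. unfold Cminus. ring.
    - ring. }
  set (bs := fun j => (ep * w j * Cmod (d j) ^ 2 + Cmod (v j) ^ 2 / w j / ep) / 2).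
  assert (Hbs : is_series bs ((ep * L + V / ep) / 2)).
  { unfold bs. apply (is_series_scal_r (/ 2)).
    apply (is_series_plus (V := R_NormedModule)).
    - apply (is_series_scal_l ep) in HL. revert HL. apply is_series_ext. intros j. unfold scal; simpl; unfold mult; simpl.
      unfold d, w. ring.
    - apply (is_series_scal_r (/ ep)) in HV. exact HV. }
  assert (Hterm : forall j, Cmod (Cmult (v j) (d j)) <= bs j).
  { intros j. rewrite Cmod_mult. unfold bs. rewrite Rmult_comm.
    apply amgm; try apply Cmod_ge_0; auto. apply Hw. }
  apply is_series_C_split in Hvd. destruct Hvd as [Hre Him].
  assert (H1 : Rabs (Re (v j0)) <= (ep * L + V / ep) / 2).
  { apply series_abs_le with (1 := Hre) (2 := Hbs). intros j. eapply Rle_trans. apply re_le_Cmod. apply Hterm. }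
  assert (H2 : Rabs (Im (v j0)) <= (ep * L + V / ep) / 2).
  { apply series_abs_le with (1 := Him) (2 := Hbs). intros j. eapply Rle_trans. apply Im_le_Cmod. apply Hterm. }
  pose proof (Cmod_le_ReIm (v j0)) as H3. fold nu in H3.
  assert (HL0 : 0 <= L).
  { apply (series_nonneg _ _ HL). intros j.
    apply Rmult_le_pos. left; apply Hw. apply pow2_ge_0. }
  assert (Heps1 : eps <= 1) by apply Rmin_l.
  assert (Heps2 : eps <= nu / (2 * ep)) by apply Rmin_r.
  assert (Hepe : ep * eps ^ 2 <= nu / 2).
  { apply Rle_trans with (ep * eps). apply Rmult_le_compat_l. lra. simpl. rewrite Rmult_1_r.
    rewrite <- (Rmult_1_r eps) at 3. apply Rmult_le_compat_l; lra.
    apply Rmult_le_reg_r with (/ ep). apply Rinv_0_lt_compat; lra.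
    replace (ep * eps * / ep) with eps by (field; lra). replace (nu / 2 * / ep) with (nu / (2 * ep)) by (field; lra). auto. }
  assert (HVe : V / ep <= nu / 2).
  { apply Rmult_le_reg_r with ep; auto. replace (V / ep * ep) with V by (field; lra).
    unfold ep. replace (nu / 2 * (2 * V / nu + 1)) with (V + nu / 2) by (field; lra). lra. }
  assert (ep * L < ep * eps ^ 2) by (apply Rmult_lt_compat_l; auto).
  lra.
Qed.

Lemma lam_one al : lam al 1 = RtoC 1.
Proof. reflexivity. Qed.

Lemma lam_real_zero (m : nat) : (1 <= m)%nat -> lam (INR m, 0) (S m) = RtoC 0.
Proof.
  intros Hm. rewrite lam_S by auto.
  replace (Cminus (RtoC (INR m)) (INR m, 0)) with (RtoC 0).
  - unfold Cdiv. rewrite Cmult_0_l, Cmult_0_r. reflexivity.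
  - unfold Cminus, Cplus, Copp, RtoC. simpl. f_equal; ring.
Qed.

Lemma lam_nz (al : C) : snd al <> 0 -> forall j, (1 <= j)%nat -> lam al j <> RtoC 0.
Proof.
  intros Hal j Hj. induction Hj.
  - rewrite lam_one. intros E. apply (f_equal fst) in E. simpl in E. lra.
  - rewrite lam_S by auto. intros E. apply (f_equal Cmod) in E. rewrite Cmod_0, Cmod_mult in E.
    assert (HINR : 0 < INR m) by (apply lt_0_INR; lia).
    assert (Hd : RtoC (INR m) <> RtoC 0) by (intros E2; apply RtoC_inj in E2; lra).
    rewrite Cmod_div in E by auto.
    assert (H1 : 0 < Cmod (lam al m)) by (apply Cmod_gt_0; auto).
    assert (H2 : 0 < Cmod (Cminus (RtoC (INR m)) al)).
    { apply Cmod_gt_0. intros E2. apply (f_equal snd) in E2. destruct al. simpl in E2, Hal. lra. }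
    assert (H3 : 0 < Cmod (RtoC (INR m))) by (apply Cmod_gt_0; auto).
    assert (0 < Cmod (lam al m) * (Cmod (Cminus (RtoC (INR m)) al) / Cmod (RtoC (INR m)))).
    { apply Rmult_lt_0_compat; auto. apply Rdiv_lt_0_compat; auto. }
    lra.
Qed.

Theorem lemma4p2 (beta : R) (s : C) :
  -1 < beta -> 0 < Cmod s -> Cmod s < 1 -> psi_self_map s ->
  ~ cyclic_A2 beta (comp_op (psi s)).
Proof.
  intros Hb H0 H1 Hps [f [[a [Ha Hwa]] Hcyc]].
  destruct (s_real s H0 H1 Hps) as [Hsb [Hsa Hsa1]].
  destruct s as [sg sb]. simpl in Hsb, Hsa, Hsa1. subst sb.
  change ((sg, 0) : C) with (RtoC sg) in *.
  assert (Hs : 0 < sg < 1) by lra.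
  destruct (INR_unbounded (2 * (1 + beta))) as [N HN].
  pose proof (weight_lb beta N Hb (Rlt_le _ _ HN)) as Hw.
  destruct (inA2_poly beta N a Hw Hwa) as [K HK].
  assert (Hln : ln sg < 0). { rewrite <- ln_1. apply ln_increasing; lra. }
  set (B := 2 * PI / ln sg).
  assert (HBl : B * ln sg = 2 * PI) by (unfold B; field; lra).
  assert (HB0 : B <> 0).
  { unfold B. intros E. unfold Rdiv in E. apply Rmult_integral in E. destruct E as [E|E].
    pose proof PI_RGT_0. lra. apply Rinv_neq_0_compat in E; auto. lra. }
  assert (Hc2 : cos (B * ln sg) = 1) by (rewrite HBl; apply cos_2PI).
  assert (Hs2 : sin (B * ln sg) = 0) by (rewrite HBl; apply sin_2PI).
  assert (Hc0 : cos (0 * ln sg) = 1) by (rewrite Rmult_0_l; apply cos_0).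
  assert (Hs0 : sin (0 * ln sg) = 0) by (rewrite Rmult_0_l; apply sin_0).
  destruct (INR_unbounded (INR (N + 2) + Rabs B + 1)) as [m Hm].
  assert (Hm1 : (1 <= m)%nat).
  { destruct m. simpl in Hm. pose proof (pos_INR (N + 2)); pose proof (Rabs_pos B); lra. lia. }
  set (l1f := lam (INR m, 0)). set (l2f := lam (INR m, B)).
  assert (VB1 : VB N l1f).
  { destruct (lam_bound m 0 (N + 2)) as [K' HK']. rewrite Rabs_R0. pose proof (Rabs_pos B). lra.
    exists K'. exact HK'. }
  assert (VB2 : VB N l2f).
  { destruct (lam_bound m B (N + 2)) as [K' HK']. lra. exists K'. exact HK'. }
  assert (VE1 : VE sg m N l1f) by (apply lam_VE; auto).
  assert (VE2 : VE sg m N l2f) by (apply lam_VE; auto).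
  destruct (pair_ex N l1f K a VB1 HK) as [_ [l10 Hl10]].
  destruct (pair_ex N l2f K a VB2 HK) as [_ [l20 Hl20]].
  pose (l1 := (l10 : C)). pose (l2 := (l20 : C)).
  assert (Hl1 : is_series (V := C_NormedModule) (fun j => Cmult (l1f j) (a j)) l1) by exact Hl10.
  assert (Hl2 : is_series (V := C_NormedModule) (fun j => Cmult (l2f j) (a j)) l2) by exact Hl20.
  clearbody l1 l2. clear Hl10 Hl20.
  destruct (Classical_Prop.classic (l1 = RtoC 0)) as [Hz|Hnz].
  - apply (no_cyclic beta sg N m f a K l1f 1 Hs Hps Hw Ha HK VB1 VE1).
    + rewrite <- Hz. exact Hl1.
    + unfold l1f. rewrite lam_one. intros E. apply (f_equal fst) in E. simpl in E. lra.
    + exact Hcyc.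
  - set (v := fun j => Cplus (Cmult l2 (l1f j)) (Cmult (Copp l1) (l2f j))).
    apply (no_cyclic beta sg N m f a K v (S m) Hs Hps Hw Ha HK).
    + apply VB_lin; auto.
    + apply VE_lin; auto.
    + apply (is_series_C_eq _ _ _ _ (is_series_Cplus _ _ _ _ (is_series_Cscal _ _ l2 Hl1) (is_series_Cscal _ _ (Copp l1) Hl2))).
      * intros j. unfold v. ring.
      * ring.
    + unfold v. unfold l1f. rewrite lam_real_zero by auto. rewrite Cmult_0_r, Cplus_0_l.
      intros E. apply (f_equal Cmod) in E. rewrite Cmod_mult, Cmod_0 in E.
      assert (Hx : 0 < Cmod (Copp l1)).
      { apply Cmod_gt_0. intros E2. apply Hnz. replace l1 with (Copp (Copp l1)) by ring. rewrite E2. unfold Copp, RtoC; simpl. f_equal; ring. }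
      assert (Hy : 0 < Cmod (l2f (S m))).
      { apply Cmod_gt_0. apply lam_nz. simpl. auto. lia. }
      nra.
    + exact Hcyc.
Qed.
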